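(* The state $h$ on $U_n^{nc}$ defined below is tracial, and $h\star_T\phi=h$ for every tracial state $\phi$ on $U_n^{nc}$. Consequently $h$ is the Haar trace on $U\langle n\rangle$ for the tensor convolution.
   Context: $U_n^{nc}$ is the universal unital $*$-algebra generated by $u_{ij}$ ($1\le i,j\le n$) with $\sum_ku_{ki}^*u_{kj}=\delta_{ij}=\sum_ku_{ik}u_{jk}^*$, with $\Delta(u_{ij})=\sum_ku_{ik}^{(1)}u_{kj}^{(2)}$ into the free product $U_n^{nc}\sqcup U_n^{nc}$, $\delta(u_{ij})=\delta_{ij}$. Tensor convolution: $\phi\star_T\psi=(\phi\otimes\psi)\circ\Delta$, where $\phi\otimes\psi$ is the unital functional on $U_n^{nc}\sqcup U_n^{nc}$ such that for $A_i\in\ker\delta$ in factor $\epsilon_i\in\{1,2\}$, $\epsilon_i\ne\epsilon_{i+1}$, $(\phi\otimes\psi)(A_1\cdots A_m)=\phi(\prod_{\epsilon_i=1}A_i)\psi(\prod_{\epsilon_i=2}A_i)$ (ordered products); equivalently $\phi\star_T\psi(u^{\epsilon_1}_{i_1j_1}\cdots u^{\epsilon_r}_{i_rj_r})=\sum_{k_1,\dots,k_r}\phi(u^{\epsilon_1}_{i_1k_1}\cdots u^{\epsilon_r}_{i_rk_r})\psi(u^{\epsilon_1}_{k_1j_1}\cdots u^{\epsilon_r}_{k_rj_r})$. A state is tracial if $\phi(ab)=\phi(ba)$; the tensor Haar trace is a tracial state $h$ with $\phi\star_Th=h=h\star_T\phi$ for all tracial $\phi$. Definition of $h$: let $H=\ell^2(\mathbb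 Z)\otimes\bigotimes_{k\in\mathbb Z}M_n(\mathbb C)$ ($M_n(\mathbb C)$ with inner product $\mathrm{Tr}(A^*B)/n$, infinite tensor product with reference vector $I_n$); $U_{ij}(\delta_k\otimes(\cdots\otimes M_k\otimes\cdots))=\delta_{k+1}\otimes(\cdots\otimes E_{ji}M_k\otimes\cdots)$ (factor at position $k$ multiplied), $U_{ij}^*(\delta_k\otimes(\cdots\otimes M_{k-1}\otimes\cdots))=\delta_{k-1}\otimes(\cdots\otimes E_{ij}M_{k-1}\otimes\cdots)$; $j(u_{ij})=U_{ij}$ extends to a unital $*$-homomorphism $U_n^{nc}\to B(H)$; $h(a)=\langle\Omega,j(a)\Omega\rangle$ with $\Omega=\delta_0\otimes\bigotimes_kI_n$. *)

(* Defs.v *)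
From Stdlib Require Import Reals ZArith List Arith Bool.
Import ListNotations.
Open Scope R_scope.

Definition C := (R * R)%type.
Definition Cadd (x y : C) : C := (fst x + fst y, snd x + snd y).
Definition Cmul (x y : C) : C :=
  (fst x * fst y - snd x * snd y, fst x * snd y + snd x * fst y).
Definition Cconj (x : C) : C := (fst x, - snd x).
Definition C0 : C := (0, 0).
Definition C1 : C := (1, 0).
Definition RtoC (r : R) : C := (r, 0).
Definition Csum (l : list C) : C := fold_right Cadd C0 l.
Definition Csum_n (n : nat) (f : nat -> C) : C := Csum (map f (seq 0 n)).
Definition delta (i j : nat) : C := if Nat.eqb i j then C1 else C0.

(* mkgen false i j = u_ij ,  mkgen true i j = u_ij^*  (indices 0..n-1) *)
Record gen := mkgen { st : bool; gi : nat; gj : nat }.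
Definition u (i j : nat) : gen := mkgen false i j.
Definition us (i j : nat) : gen := mkgen true i j.
Definition word := list gen.
Definition valid (n : nat) (w : word) : Prop :=
  Forall (fun g => (gi g < n)%nat /\ (gj g < n)%nat) w.
Definition adj (w : word) : word :=
  rev (map (fun g => mkgen (negb (st g)) (gi g) (gj g)) w).

(* A linear functional on U_n^nc is given by its values on monomials
   (the monomials span U_n^nc). *)
Definition functional := word -> C.

(* phi vanishes on the two-sided ideal generated by the defining relations
   sum_k u_ki^* u_kj - delta_ij  and  sum_k u_ik u_jk^* - delta_ij,
   i.e. phi factors through U_n^nc. *)
Definition respects_relations (n : nat) (phi : functional) : Prop :=
  forall (a b : word) (i j : nat), valid n a -> valid n b -> (i < n)%nat -> (j < n)%nat ->
    Csum_n n (fun k => phi (a ++ [us k i; u k j] ++ b)) = Cmul (delta i j) (phi (a ++ b)) /\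
    Csum_n n (fun k => phi (a ++ [u i k; us j k] ++ b)) = Cmul (delta i j) (phi (a ++ b)).

(* positivity: phi(x^* x) >= 0 for x = sum_p c_p w_p *)
Definition positive (n : nat) (phi : functional) : Prop :=
  forall l : list (C * word), Forall (fun p => valid n (snd p)) l ->
    let s := Csum (flat_map (fun p => map (fun q =>
               Cmul (Cmul (Cconj (fst p)) (fst q)) (phi (adj (snd p) ++ snd q))) l) l) in
    snd s = 0 /\ 0 <= fst s.

Definition is_state (n : nat) (phi : functional) : Prop :=
  phi [] = C1 /\ respects_relations n phi /\ positive n phi.

Definition tracial (n : nat) (phi : functional) : Prop :=
  forall v w, valid n v -> valid n w -> phi (v ++ w) = phi (w ++ v).

Definition feq (n : nat) (phi psi : functional) : Prop :=
  forall w, valid n w -> phi w = psi w.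

Fixpoint ktuples (n r : nat) : list (list nat) :=
  match r with
  | O => [[]]
  | S r' => flat_map (fun k => map (cons k) (ktuples n r')) (seq 0 n)
  end.
Definition left_word (w : word) (ks : list nat) : word :=
  map (fun p => mkgen (st (fst p)) (gi (fst p)) (snd p)) (combine w ks).
Definition right_word (w : word) (ks : list nat) : word :=
  map (fun p => mkgen (st (fst p)) (snd p) (gj (fst p))) (combine w ks).
(* (phi *_T psi)(u^{e1}_{i1 j1} ... u^{er}_{ir jr})
     = sum_{k} phi(u^{e1}_{i1 k1} ...) psi(u^{e1}_{k1 j1} ...) *)
Definition conv (n : nat) (phi psi : functional) : functional := fun w =>
  Csum (map (fun ks => Cmul (phi (left_word w ks)) (psi (right_word w ks)))
            (ktuples n (length w))).

(* matrices in M_n(R) as entry functions (entries outside 0..n-1 unused) *)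
Definition mat := nat -> nat -> R.
Definition Iden : mat := fun a b => if Nat.eqb a b then 1 else 0.
(* Emul p q M = E_pq M *)
Definition Emul (p q : nat) (M : mat) : mat :=
  fun a b => if Nat.eqb a p then M q b else 0.
Definition mtrace (n : nat) (M : mat) : R := fold_right Rplus 0 (map (fun a => M a a) (seq 0 n)).
(* elementary tensor delta_k (x) (x)_q F q  in  l^2(Z) (x) (x)_{q in Z} M_n *)
Definition hvec := (Z * (Z -> mat))%type.
Definition upd (F : Z -> mat) (k : Z) (M : mat) : Z -> mat :=
  fun q => if Z.eqb q k then M else F q.
(* U_ij : delta_k (x) (.. M_k ..) |-> delta_{k+1} (x) (.. E_ji M_k ..)
   U_ij^*: delta_k (x) (.. M_{k-1} ..) |-> delta_{k-1} (x) (.. E_ij M_{k-1} ..) *)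
Definition step (g : gen) (s : hvec) : hvec :=
  let (k, F) := s in
  if st g then ((k - 1)%Z, upd F (k - 1)%Z (Emul (gi g) (gj g) (F (k - 1)%Z)))
  else ((k + 1)%Z, upd F k (Emul (gj g) (gi g) (F k))).
Definition Omega : hvec := (0%Z, fun _ => Iden).
(* j(w) Omega ; the rightmost letter acts first *)
Definition act (w : word) : hvec := fold_right step Omega w.
(* h(w) = < Omega, j(w) Omega >.  Only positions in [-|w|, |w|] can differ
   from I_n, and <I_n, M> = Tr(M)/n, so the infinite product of the factor
   inner products reduces to the finite product below. *)
Definition haar (n : nat) : functional := fun w =>
  let (k, F) := act w in
  let L := length w in
  if Z.eqb k 0 then
    RtoC (fold_right Rmult 1
      (map (fun t => mtrace n (F (Z.of_nat t - Z.of_nat L)%Z) / INR n) (seq 0 (2 * L + 1))))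
  else C0.

(* Main.v *)
From Stdlib Require Import Reals ZArith List Arith Bool Lia Lra FunctionalExtensionality.
Require Import Defs.
Import ListNotations.
Open Scope R_scope.

Lemma Cext : forall x y : C, fst x = fst y -> snd x = snd y -> x = y.
Proof. intros [a b] [c d]; simpl; intros; subst; auto. Qed.

Ltac Csolve := repeat match goal with p : C |- _ => destruct p end;
  unfold Cmul, Cadd, Cconj, C0, C1, RtoC in *; simpl in *; apply Cext; simpl; ring.

Lemma Csum_app : forall l1 l2, Csum (l1 ++ l2) = Cadd (Csum l1) (Csum l2).
Proof. induction l1; intros; simpl. Csolve. rewrite IHl1. Csolve. Qed.

Lemma Csum_map_ext : forall {A} (f g : A -> C) l, (forall x, In x l -> f x = g x) ->
  Csum (map f l) = Csum (map g l).
Proof. induction l; intros; simpl; auto. rewrite H by (left; auto). rewrite IHl; auto.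
  intros; apply H; right; auto. Qed.

Lemma Csum_map_add : forall {A} (f g : A -> C) l,
  Csum (map (fun x => Cadd (f x) (g x)) l) = Cadd (Csum (map f l)) (Csum (map g l)).
Proof. induction l; simpl. Csolve. rewrite IHl. Csolve. Qed.

Lemma Csum_map_mull : forall {A} (f : A -> C) c l,
  Csum (map (fun x => Cmul c (f x)) l) = Cmul c (Csum (map f l)).
Proof. induction l; simpl. Csolve. rewrite IHl. Csolve. Qed.

Lemma Csum_map_mulr : forall {A} (f : A -> C) c l,
  Csum (map (fun x => Cmul (f x) c) l) = Cmul (Csum (map f l)) c.
Proof. induction l; simpl. Csolve. rewrite IHl. Csolve. Qed.

Lemma Csum_map_zero : forall {A} (l : list A), Csum (map (fun _ => C0) l) = C0.
Proof. induction l; simpl; auto. rewrite IHl. Csolve. Qed.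

Lemma Csum_flat_map : forall {A B} (f : B -> C) (g : A -> list B) l,
  Csum (map f (flat_map g l)) = Csum (map (fun x => Csum (map f (g x))) l).
Proof. induction l; simpl; auto. rewrite map_app, Csum_app, IHl; auto. Qed.

Lemma Csum_swap : forall {A B} (f : A -> B -> C) l1 l2,
  Csum (map (fun x => Csum (map (fun y => f x y) l2)) l1) =
  Csum (map (fun y => Csum (map (fun x => f x y) l1)) l2).
Proof. induction l1; intros; simpl.
  - rewrite Csum_map_zero; auto.
  - rewrite IHl1. rewrite <- Csum_map_add. auto. Qed.

Lemma Csum_map_map : forall {A B} (f : B -> C) (g : A -> B) l,
  Csum (map f (map g l)) = Csum (map (fun x => f (g x)) l).
Proof. intros; rewrite map_map; auto. Qed.

Definition Rsum (l : list R) : R := fold_right Rplus 0 l.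

Lemma Csum_RtoC : forall {A} (f : A -> R) l,
  Csum (map (fun x => RtoC (f x)) l) = RtoC (Rsum (map f l)).
Proof. induction l; simpl; auto. rewrite IHl. Csolve. Qed.

Lemma Rsum_ext : forall {A} (f g : A -> R) l, (forall x, In x l -> f x = g x) ->
  Rsum (map f l) = Rsum (map g l).
Proof. induction l; intros; simpl; auto. rewrite H by (left; auto). rewrite IHl; auto.
  intros; apply H; right; auto. Qed.

Lemma Rsum_delta : forall (g : nat -> R) r s m,
  Rsum (map (fun k => if Nat.eqb k r then g k else 0) (seq s m)) =
  if (s <=? r)%nat && (r <? s + m)%nat then g r else 0.
Proof.
  intros g r s m; revert s; induction m; intros; simpl.
  - destruct (s <=? r)%nat eqn:E1; destruct (r <? s + 0)%nat eqn:E2; simpl; auto.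
    apply Nat.leb_le in E1; apply Nat.ltb_lt in E2; lia.
  - rewrite IHm. destruct (Nat.eqb_spec s r).
    + subst. replace ((S r <=? r)%nat) with false by (symmetry; apply Nat.leb_gt; lia).
      replace ((r <=? r)%nat) with true by (symmetry; apply Nat.leb_le; lia).
      replace ((r <? r + S m)%nat) with true by (symmetry; apply Nat.ltb_lt; lia). simpl; ring.
    + destruct (S s <=? r)%nat eqn:E1; destruct (r <? S s + m)%nat eqn:E2;
      destruct (s <=? r)%nat eqn:E3; destruct (r <? s + S m)%nat eqn:E4; simpl;
      repeat match goal with H : (_ <=? _)%nat = true |- _ => apply Nat.leb_le in H
        | H : (_ <=? _)%nat = false |- _ => apply Nat.leb_gt in H
        | H : (_ <? _)%nat = true |- _ => apply Nat.ltb_lt in H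
        | H : (_ <? _)%nat = false |- _ => apply Nat.ltb_ge in H end; try ring; lia.
Qed.

Lemma Rsum_delta0 : forall (g : nat -> R) r n, (r < n)%nat ->
  Rsum (map (fun k => if Nat.eqb k r then g k else 0) (seq 0 n)) = g r.
Proof. intros. rewrite Rsum_delta.
  replace ((0 <=? r)%nat) with true by (symmetry; apply Nat.leb_le; lia).
  replace ((r <? 0 + n)%nat) with true by (symmetry; apply Nat.ltb_lt; lia). auto. Qed.

Lemma Rsum_const : forall c l, Rsum (map (fun _ : nat => c) l) = INR (length l) * c.
Proof. induction l; simpl; [ring|]. rewrite IHl. destruct (length l); simpl; ring. Qed.

Lemma Rsum_mull : forall {A} (f : A -> R) c l, Rsum (map (fun x => c * f x) l) = c * Rsum (map f l).
Proof. induction l; simpl; [ring|]. rewrite IHl; ring. Qed.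

Lemma Rsum_add : forall {A} (f g : A -> R) l,
  Rsum (map (fun x => f x + g x) l) = Rsum (map f l) + Rsum (map g l).
Proof. induction l; simpl; [ring|]. rewrite IHl; ring. Qed.

Lemma Rsum_app : forall l1 l2, Rsum (l1 ++ l2) = Rsum l1 + Rsum l2.
Proof. induction l1; simpl; intros; [ring|]. rewrite IHl1; ring. Qed.

Lemma Rsum_swap : forall {A B} (f : A -> B -> R) l1 l2,
  Rsum (map (fun x => Rsum (map (fun y => f x y) l2)) l1) =
  Rsum (map (fun y => Rsum (map (fun x => f x y) l1)) l2).
Proof. induction l1; intros; simpl.
  - induction l2; simpl; auto. rewrite <- IHl2; ring.
  - rewrite IHl1. rewrite <- Rsum_add. auto. Qed.

Lemma Rsum_flat_map : forall {A B} (f : B -> R) (g : A -> list B) l,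
  Rsum (map f (flat_map g l)) = Rsum (map (fun x => Rsum (map f (g x))) l).
Proof. induction l; simpl; auto. rewrite map_app, Rsum_app, IHl; auto. Qed.

Lemma Rsum_nonneg : forall l, Forall (fun x => 0 <= x) l -> 0 <= Rsum l.
Proof. induction 1; simpl; lra. Qed.

Fixpoint zprod (f : Z -> R) (lo : Z) (m : nat) : R :=
  match m with O => 1 | S m' => f lo * zprod f (lo + 1)%Z m' end.

Lemma zprod_app : forall f a b lo,
  zprod f lo (a + b) = zprod f lo a * zprod f (lo + Z.of_nat a)%Z b.
Proof. induction a; intros; simpl.
  - rewrite Z.add_0_r; ring.
  - rewrite IHa. replace (lo + 1 + Z.of_nat a)%Z with (lo + Z.pos (Pos.of_succ_nat a))%Z by lia. ring.
Qed.

Lemma zprod_ext : forall f g m lo, (forall x, (lo <= x < lo + Z.of_nat m)%Z -> f x = g x) ->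
  zprod f lo m = zprod g lo m.
Proof. induction m; intros; simpl; auto. rewrite H by lia. rewrite (IHm (lo+1)%Z); auto.
  intros; apply H; lia. Qed.

Lemma zprod_one : forall f m lo, (forall x, (lo <= x < lo + Z.of_nat m)%Z -> f x = 1) ->
  zprod f lo m = 1.
Proof. induction m; intros; simpl; auto. rewrite H by lia. rewrite IHm. ring.
  intros; apply H; lia. Qed.

Lemma zprod_zero : forall f m lo x, (lo <= x < lo + Z.of_nat m)%Z -> f x = 0 ->
  zprod f lo m = 0.
Proof. induction m; intros; simpl; [lia|].
  destruct (Z.eq_dec x lo). subst; rewrite H0; ring.
  rewrite (IHm (lo+1)%Z x); [ring|lia|auto]. Qed.

Lemma zprod_shift : forall f c m lo, zprod (fun x => f (x + c)%Z) lo m = zprod f (lo + c)%Z m.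
Proof. induction m; intros; simpl; auto. rewrite IHm. replace (lo+1+c)%Z with (lo+c+1)%Z by lia; auto. Qed.

Lemma zprod_mult : forall f g m lo, zprod (fun x => f x * g x) lo m = zprod f lo m * zprod g lo m.
Proof. induction m; intros; simpl; [ring|]. rewrite IHm; ring. Qed.

Lemma zprod_split : forall f m lo x0, (lo <= x0 < lo + Z.of_nat m)%Z ->
  zprod f lo m = zprod f lo (Z.to_nat (x0 - lo)) * f x0 *
                 zprod f (x0 + 1)%Z (m - Z.to_nat (x0 - lo) - 1).
Proof. intros. replace m with (Z.to_nat (x0 - lo) + (1 + (m - Z.to_nat (x0 - lo) - 1)))%nat at 1 by lia.
  rewrite zprod_app, zprod_app. simpl.
  replace (lo + Z.of_nat (Z.to_nat (x0 - lo)))%Z with x0 by lia.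
  replace (x0 + Z.of_nat 1)%Z with (x0+1)%Z by lia. ring. Qed.

Lemma zprod_box : forall f N lo m,
  (forall x, f x <> 1 -> (- Z.of_nat N <= x <= Z.of_nat N)%Z) ->
  (lo <= - Z.of_nat N)%Z -> (Z.of_nat N < lo + Z.of_nat m)%Z ->
  zprod f lo m = zprod f (- Z.of_nat N)%Z (2 * N + 1).
Proof. intros.
  assert (E : m = (Z.to_nat (- Z.of_nat N - lo) + ((2*N+1) + (m - Z.to_nat (- Z.of_nat N - lo) - (2*N+1))))%nat) by lia.
  rewrite E at 1. rewrite zprod_app, zprod_app.
  rewrite (zprod_one f (Z.to_nat _) lo).
  rewrite (zprod_one f (m - _ - _)%nat). replace (lo + Z.of_nat (Z.to_nat (- Z.of_nat N - lo)))%Z with (- Z.of_nat N)%Z by lia. ring.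
  - intros x Hx. destruct (Req_dec (f x) 1); auto. apply H in H2. lia.
  - intros x Hx. destruct (Req_dec (f x) 1); auto. apply H in H2. lia.
Qed.

Lemma fold_seq_zprod : forall g c s m,
  fold_right Rmult 1 (map (fun t => g (Z.of_nat t - c)%Z) (seq s m)) = zprod g (Z.of_nat s - c)%Z m.
Proof. intros g c s m; revert s; induction m; intros; simpl; auto. rewrite IHm.
  f_equal. f_equal. lia. Qed.


(* ---------- symbolic matrices: None = 0, Some None = I, Some (Some (p,q)) = E_pq ---------- *)
Definition sm := option (option (nat * nat)).
Definition comb (x y : sm) : sm :=
  match x with
  | None => None
  | Some None => y
  | Some (Some (p, q)) =>
      match y with
      | None => None
      | Some None => x
      | Some (Some (r, s)) => if Nat.eqb q r then Some (Some (p, s)) else None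
      end
  end.
Definition red (l : list (nat * nat)) : sm := fold_right (fun p r => comb (Some (Some p)) r) (Some None) l.

Lemma comb_I_r : forall x, comb x (Some None) = x.
Proof. destruct x as [[[p q]|]|]; reflexivity. Qed.
Lemma comb_None_r : forall x, comb x None = None.
Proof. destruct x as [[[p q]|]|]; reflexivity. Qed.
Lemma comb_assoc : forall x y z, comb x (comb y z) = comb (comb x y) z.
Proof. intros [[[p q]|]|] [[[r s]|]|] [[[t u]|]|]; simpl; auto;
  repeat match goal with |- context [Nat.eqb ?a ?b] => let E := fresh in destruct (Nat.eqb a b) eqn:E; simpl; try rewrite E end; auto; congruence. Qed.
Lemma red_app : forall l1 l2, red (l1 ++ l2) = comb (red l1) (red l2).
Proof. induction l1; intros; [reflexivity|].
  change (comb (Some (Some a)) (red (l1++l2)) = comb (comb (Some (Some a)) (red l1)) (red l2)).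
  rewrite IHl1, comb_assoc; auto. Qed.

Definition ival (r : sm) (M : mat) : mat :=
  match r with None => fun _ _ => 0 | Some None => M | Some (Some (p, q)) => Emul p q M end.
Definition emuls (l : list (nat * nat)) (M : mat) : mat :=
  fold_right (fun p M => Emul (fst p) (snd p) M) M l.
Lemma emuls_app : forall l1 l2 M, emuls (l1 ++ l2) M = emuls l1 (emuls l2 M).
Proof. induction l1; intros; simpl; auto. rewrite IHl1; auto. Qed.
Lemma emuls_red : forall l M, emuls l M = ival (red l) M.
Proof. induction l as [|[p q] l IH]; intros; [reflexivity|].
  change (Emul p q (emuls l M) = ival (comb (Some (Some (p,q))) (red l)) M). rewrite IH.
  destruct (red l) as [[[r s]|]|]; simpl; auto; apply functional_extensionality; intro a;
  apply functional_extensionality; intro b; unfold Emul.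
  - destruct (Nat.eqb_spec q r); simpl; subst.
    + auto.
    + destruct (a =? p)%nat; auto.
  - destruct (a =? p)%nat; auto.
Qed.

Section N.
Variable n : nat.
Definition tv (r : sm) : R :=
  match r with None => 0 | Some None => 1
  | Some (Some (p, q)) => if Nat.eqb p q && Nat.ltb p n then / INR n else 0 end.

Lemma mtrace_ival : (0 < n)%nat -> forall r, mtrace n (ival r Iden) / INR n = tv r.
Proof. intros Hn [[[p q]|]|]; unfold mtrace; simpl.
  - unfold Emul, Iden.
    transitivity (Rsum (map (fun a => if Nat.eqb a p then (if Nat.eqb q p then / INR n else 0) else 0) (seq 0 n))).
    + unfold Rdiv. rewrite Rmult_comm. fold (Rsum (map (fun a : nat => if (a =? p)%nat then if (q =? a)%nat then 1 else 0 else 0) (seq 0 n))).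
      rewrite <- Rsum_mull. apply Rsum_ext. intros a _. destruct (Nat.eqb_spec a p); subst; [|ring].
      destruct (Nat.eqb q p); ring.
    + rewrite Rsum_delta. simpl. destruct (Nat.eqb_spec q p); destruct (Nat.eqb_spec p q); subst; try lia;
      destruct (p <? n)%nat; simpl; auto.
  - fold (Rsum (map (fun a => Iden a a) (seq 0 n))).
    rewrite (Rsum_ext _ (fun _ => 1)). rewrite Rsum_const, length_seq. field.
    apply not_0_INR; lia. intros; unfold Iden; rewrite Nat.eqb_refl; auto.
  - fold (Rsum (map (fun a : nat => 0) (seq 0 n))). rewrite Rsum_const. unfold Rdiv; ring.
Qed.

Definition pvalid (p : nat * nat) := (fst p < n /\ snd p < n)%nat.
Definition svalid (r : sm) := match r with Some (Some p) => pvalid p | _ => True end.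
Lemma comb_valid : forall x y, svalid x -> svalid y -> svalid (comb x y).
Proof. intros [[[p q]|]|] [[[r s]|]|]; simpl; auto. destruct (q =? r)%nat; simpl; unfold pvalid in *; simpl in *; intuition. Qed.
Lemma red_valid : forall l, Forall pvalid l -> svalid (red l).
Proof. induction 1; [exact I|]. change (svalid (comb (Some (Some x)) (red l))). apply comb_valid; auto. Qed.

Lemma tv_comm : forall x y, svalid x -> svalid y -> tv (comb x y) = tv (comb y x).
Proof. intros [[[p q]|]|] [[[r s]|]|]; unfold svalid, pvalid in *; simpl in *; intros; auto.
  repeat match goal with |- context [Nat.eqb ?a ?b] => destruct (Nat.eqb_spec a b) end;
  subst; simpl; auto; try lia;
  repeat match goal with |- context [Nat.eqb ?a ?b] => destruct (Nat.eqb_spec a b) end; subst; simpl; auto; try lia;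
  repeat match goal with |- context [Nat.ltb ?a ?b] => replace (Nat.ltb a b) with true by (symmetry; apply Nat.ltb_lt; lia) end; auto.
Qed.
End N.

Inductive xg := Mv (g : gen) | Sy (d : Z) (a c : nat).
Definition dK (x : xg) : Z := match x with Mv g => if st g then (-1)%Z else 1%Z | Sy _ _ _ => 0%Z end.
Fixpoint K (w : list xg) : Z := match w with [] => 0%Z | x :: w' => (dK x + K w')%Z end.
Definition lop (x : xg) (y : Z) : list (nat * nat) :=
  match x with
  | Mv g => if st g then (if Z.eqb y (-1) then [(gi g, gj g)] else [])
            else (if Z.eqb y 0 then [(gj g, gi g)] else [])
  | Sy d a c => if Z.eqb y d then [(a, c)] else []
  end.
Fixpoint O (w : list xg) (y : Z) : list (nat * nat) :=
  match w with [] => [] | x :: w' => lop x (y - K w')%Z ++ O w' y end.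

Definition xstep (x : xg) (s : hvec) : hvec :=
  match x with
  | Mv g => step g s
  | Sy d a c => let (k, F) := s in (k, upd F (k + d)%Z (Emul a c (F (k + d)%Z)))
  end.

Lemma xact_spec : forall w k0 F0, fold_right xstep (k0, F0) w =
  ((k0 + K w)%Z, fun x => emuls (O w (x - k0)%Z) (F0 x)).
Proof. induction w as [|g w IH]; intros; simpl.
  - rewrite Z.add_0_r; reflexivity.
  - rewrite IH. destruct g as [[s i j]|d a c].
    + destruct s; cbn [xstep step st gi gj dK lop]; f_equal; try lia; apply functional_extensionality; intro x;
      unfold upd; rewrite emuls_app.
      * destruct (Z.eqb_spec x (k0 + K w - 1)%Z); destruct (Z.eqb_spec (x - k0 - K w) (-1))%Z; try lia.
        -- rewrite e. reflexivity.
        -- reflexivity.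
      * destruct (Z.eqb_spec x (k0 + K w)%Z); destruct (Z.eqb_spec (x - k0 - K w) 0)%Z; try lia.
        -- rewrite e. reflexivity.
        -- reflexivity.
    + cbn [xstep step st gi gj dK lop]; f_equal; try lia; apply functional_extensionality; intro x; unfold upd; rewrite emuls_app.
      destruct (Z.eqb_spec x (k0 + K w + d)%Z); destruct (Z.eqb_spec (x - k0 - K w) d)%Z; try lia.
      -- rewrite e. reflexivity.
      -- reflexivity.
Qed.

Definition bl (x : xg) : nat := match x with Mv _ => 1%nat | Sy d _ _ => S (Z.to_nat (Z.abs d)) end.
Fixpoint bnd (w : list xg) : nat := match w with [] => 0%nat | x :: w' => (bl x + bnd w')%nat end.

Lemma K_bnd : forall w, (Z.abs (K w) <= Z.of_nat (bnd w))%Z.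
Proof. induction w as [|[[s i j]|d a c] w IH]; cbn [K bnd dK bl st]; [lia| destruct s; lia | lia]. Qed.

Lemma O_supp : forall w x, O w x <> [] -> (Z.abs x <= Z.of_nat (bnd w))%Z.
Proof. induction w as [|g w IH]; intros x H; simpl in *; [congruence|].
  pose proof (K_bnd w).
  destruct (O w x) eqn:E.
  - rewrite app_nil_r in H. destruct g as [[[|] i j]|d a c]; simpl in *.
    + destruct (Z.eqb_spec (x - K w) (-1))%Z; [lia|congruence].
    + destruct (Z.eqb_spec (x - K w) 0)%Z; [lia|congruence].
    + destruct (Z.eqb_spec (x - K w) d)%Z; [lia|congruence].
  - assert (Z.abs x <= Z.of_nat (bnd w))%Z by (apply IH; congruence).
    destruct g as [[[|] i j]|d a c]; cbn [bnd bl]; lia.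
Qed.

Lemma K_app : forall v w, K (v ++ w) = (K v + K w)%Z.
Proof. induction v; simpl; intros; auto. rewrite IHv; lia. Qed.
Lemma O_app : forall v w x, O (v ++ w) x = O v (x - K w)%Z ++ O w x.
Proof. induction v as [|g v IH]; simpl; intros; auto. rewrite IH, K_app, app_assoc.
  replace (x - (K v + K w))%Z with (x - K w - K v)%Z by lia. auto. Qed.
Lemma bnd_app : forall v w, bnd (v ++ w) = (bnd v + bnd w)%nat.
Proof. induction v; simpl; intros; auto. rewrite IHv; lia. Qed.

Section HS.
Variable n : nat.
Definition Hwin (N : nat) (w : list xg) : C :=
  if Z.eqb (K w) 0 then RtoC (zprod (fun x => tv n (red (O w x))) (- Z.of_nat N)%Z (2 * N + 1)) else C0.
Definition Hs (w : list xg) : C := Hwin (bnd w) w.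

Lemma Hwin_indep : forall w N, (bnd w <= N)%nat -> Hwin N w = Hs w.
Proof. intros. unfold Hs, Hwin. destruct (Z.eqb (K w) 0); auto. f_equal.
  apply zprod_box. intros x Hx. assert (Z.abs x <= Z.of_nat (bnd w))%Z; [|lia].
  apply O_supp. intro E; rewrite E in Hx; simpl in Hx; auto. lia. lia. Qed.

Definition xvalid (w : list xg) := Forall (fun x => match x with Mv g => (gi g < n /\ gj g < n)%nat
   | Sy _ a c => (a < n /\ c < n)%nat end) w.

Lemma xvalid_app : forall v w, xvalid (v ++ w) <-> xvalid v /\ xvalid w.
Proof. intros; unfold xvalid; rewrite Forall_app; tauto. Qed.

Lemma O_valid : forall w x, xvalid w -> Forall (pvalid n) (O w x).
Proof. induction 1; simpl; auto. apply Forall_app; split; auto.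
  destruct x0 as [[[|] i j]|d a c]; simpl; unfold lop; simpl;
  match goal with |- context [Z.eqb ?a ?b] => destruct (Z.eqb a b) end; auto;
  repeat constructor; unfold pvalid; simpl; tauto. Qed.

Lemma H_tracial : (0 < n)%nat -> forall v w, xvalid v -> xvalid w -> Hs (v ++ w) = Hs (w ++ v).
Proof. intros Hn v w Hv Hw.
  set (N := (2 * (bnd v + bnd w))%nat).
  rewrite <- (Hwin_indep (v ++ w) N), <- (Hwin_indep (w ++ v) N) by (rewrite bnd_app; lia).
  unfold Hwin. rewrite !K_app. rewrite Z.add_comm.
  destruct (Z.eqb_spec (K w + K v) 0); auto. f_equal.
  pose proof (K_bnd w). pose proof (K_bnd v).
  set (f := fun x => tv n (red (O w x ++ O v (x - K w)%Z))).
  assert (Hsupp : forall x, f x <> 1 -> (- Z.of_nat (bnd v + bnd w) <= x <= Z.of_nat (bnd v + bnd w))%Z).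
  { intros x Hx. unfold f in Hx. destruct (O w x) eqn:E1. destruct (O v (x - K w)%Z) eqn:E2.
    simpl in Hx; congruence.
    assert (Z.abs (x - K w) <= Z.of_nat (bnd v))%Z by (apply O_supp; congruence). lia.
    assert (Z.abs x <= Z.of_nat (bnd w))%Z by (apply O_supp; congruence). lia. }
  transitivity (zprod f (- Z.of_nat N) (2 * N + 1)).
  - apply zprod_ext. intros x _. unfold f. rewrite O_app, !red_app. apply tv_comm; apply red_valid, O_valid; auto.
  - rewrite (zprod_ext (fun x => tv n (red (O (w ++ v) x))) (fun x => f (x + K w)%Z)).
    + rewrite zprod_shift. rewrite (zprod_box f (bnd v + bnd w)) by (auto; lia).
      rewrite (zprod_box f (bnd v + bnd w) (- Z.of_nat N + K w)) by (auto; lia). auto.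
    + intros x _. unfold f. rewrite O_app. replace (x + K w - K w)%Z with x by lia.
      replace (x - K v)%Z with (x + K w)%Z by lia. auto.
Qed.
End HS.

Lemma haar_H : forall n w, (0 < n)%nat -> haar n w = Hs n (map Mv w).
Proof. intros n w Hn. unfold haar, act.
  assert (E : fold_right step Omega w = fold_right xstep Omega (map Mv w)).
  { induction w; simpl; auto. rewrite IHw; auto. }
  rewrite E. unfold Omega. rewrite xact_spec.
  assert (Hb : bnd (map Mv w) = length w) by (clear E; induction w; simpl; [auto|rewrite IHw; auto]).
  unfold Hs, Hwin. rewrite Hb. rewrite Z.add_0_l.
  destruct (Z.eqb (K (map Mv w)) 0); auto. f_equal.
  rewrite (fold_seq_zprod (fun x => mtrace n (emuls (O (map Mv w) (x - 0)) Iden) / INR n) (Z.of_nat (length w))).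
  simpl Z.of_nat. rewrite Z.sub_0_l.
  apply zprod_ext. intros x _. rewrite Z.sub_0_r, emuls_red. apply mtrace_ival; auto.
Qed.


Definition stayge (S : list xg) := Forall (fun x => match x with Sy d _ _ => (0 <= d)%Z | _ => False end) S.
Definition stayle (S : list xg) := Forall (fun x => match x with Sy d _ _ => (d <= -1)%Z | _ => False end) S.
Definition allstay (S : list xg) := Forall (fun x => match x with Sy _ _ _ => True | _ => False end) S.
Definition shift (e : Z) (S : list xg) : list xg :=
  map (fun x => match x with Sy d a c => Sy (d + e)%Z a c | m => m end) S.

Lemma O_cons : forall x w y, O (x :: w) y = lop x (y - K w)%Z ++ O w y.
Proof. reflexivity. Qed.
Lemma K_cons : forall x w, K (x :: w) = (dK x + K w)%Z.
Proof. reflexivity. Qed.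

Lemma stayge_all : forall S, stayge S -> allstay S.
Proof. induction 1; constructor; auto. destruct x; auto. Qed.
Lemma stayle_all : forall S, stayle S -> allstay S.
Proof. induction 1; constructor; auto. destruct x; auto. Qed.

Lemma K_stays : forall S, allstay S -> K S = 0%Z.
Proof. induction 1; simpl; auto. destruct x; try contradiction. simpl; lia. Qed.
Lemma shift_all : forall e S, allstay S -> allstay (shift e S).
Proof. induction 1; simpl; constructor; auto. destruct x; auto. Qed.
Lemma O_shift : forall e S y, allstay S -> O (shift e S) y = O S (y - e)%Z.
Proof. intros e S y HS; revert y; induction HS; intros y; simpl; auto. destruct x as [g|d a c]; try contradiction. simpl.
  rewrite IHHS, K_stays by (apply shift_all; auto). rewrite K_stays by auto.
  f_equal. destruct (Z.eqb_spec (y - 0) (d + e))%Z; destruct (Z.eqb_spec (y - e - 0) d)%Z; auto; lia. Qed.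
Lemma O_stayge : forall S, stayge S -> O S (-1)%Z = [].
Proof. induction 1; [reflexivity|]. destruct x as [g|d a c]; try contradiction.
  rewrite O_cons, IHForall. rewrite K_stays by (apply stayge_all; auto). unfold lop.
  destruct (Z.eqb_spec (-1 - 0) d)%Z; auto; lia. Qed.
Lemma O_stayle : forall S, stayle S -> O S 0%Z = [].
Proof. induction 1; [reflexivity|]. destruct x as [g|d a c]; try contradiction.
  rewrite O_cons, IHForall. rewrite K_stays by (apply stayle_all; auto). unfold lop.
  destruct (Z.eqb_spec (0 - 0) d)%Z; auto; lia. Qed.
Lemma bnd_shift_le : forall e S, (bnd (shift e S) <= bnd S + length S * Z.to_nat (Z.abs e))%nat.
Proof. induction S as [|x S IH]; simpl; auto. destruct x; simpl; lia. Qed.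


Section Merge.
Variable n : nat.

Lemma Csum_zero_if : forall (b : bool), (if b then C0 else C0) = C0.
Proof. destruct b; auto. Qed.

(* peak: in time, u c d goes up then us a b comes back *)
Lemma H_peak : forall A S B a b c d, stayge S ->
  Hs n (A ++ Mv (mkgen true a b) :: S ++ Mv (mkgen false c d) :: B) =
  if Nat.eqb b d then Hs n (A ++ shift 1 S ++ Sy 0 a c :: B) else C0.
Proof. intros A S B a b c d HS.
  set (w1 := A ++ Mv (mkgen true a b) :: S ++ Mv (mkgen false c d) :: B).
  set (w2 := A ++ shift 1 S ++ Sy 0 a c :: B).
  set (N := (bnd w1 + bnd w2)%nat).
  assert (HSa := stayge_all S HS).
  rewrite <- (Hwin_indep n w1 N), <- (Hwin_indep n w2 N) by lia.
  assert (EK : K w1 = K w2).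
  { unfold w1, w2. repeat first [rewrite K_app | rewrite K_cons].
    rewrite (K_stays S), (K_stays (shift _ S)) by (auto; apply shift_all; auto).
    cbn [dK st]; lia. }
  assert (KS1 : K (S ++ Mv (mkgen false c d) :: B) = (1 + K B)%Z) by (rewrite K_app, K_cons, K_stays by auto; cbn [dK st]; lia).
  assert (KS2 : K (shift 1 S ++ Sy 0 a c :: B) = K B) by (rewrite K_app, K_cons, K_stays by (apply shift_all; auto); cbn [dK st]; lia).
  assert (EO : forall x, red (O w1 x) = if Z.eqb x (K B) then (if Nat.eqb b d then red (O w2 x) else None) else red (O w2 x)).
  { intro x. unfold w1, w2. repeat first [rewrite O_app | rewrite O_cons].
    repeat first [rewrite K_app | rewrite K_cons]. rewrite O_shift by auto.
    rewrite (K_stays S), (K_stays (shift _ S)) by (auto; apply shift_all; auto).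
    cbn [lop st gi gj dK].
    replace (x - (-1 + (0 + (1 + K B))))%Z with (x - K B)%Z by lia.
    replace (x - (0 + (1 + K B)))%Z with (x - K B - 1)%Z by lia.
    replace (x - (1 + K B))%Z with (x - K B - 1)%Z by lia.
    replace (x - (0 + (0 + K B)))%Z with (x - K B)%Z by lia.
    replace (x - (0 + K B) - 1)%Z with (x - K B - 1)%Z by lia.
    destruct (Z.eqb_spec x (K B)).
    - replace (x - K B)%Z with 0%Z by lia. simpl Z.eqb. simpl Z.sub.
      rewrite O_stayge by auto. simpl app.
      rewrite !red_app.
      change (red ((a,b) :: (d,c) :: O B x)) with (comb (Some (Some (a,b))) (comb (Some (Some (d,c))) (red (O B x)))).
      change (red ((a,c) :: O B x)) with (comb (Some (Some (a,c))) (red (O B x))).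
      rewrite (comb_assoc (Some (Some (a,b)))). simpl comb at 2.
      destruct (Nat.eqb b d); auto. simpl comb at 2. rewrite comb_None_r; auto.
    - replace ((x - K B - 1) =? -1)%Z with false by (symmetry; apply Z.eqb_neq; lia).
      replace ((x - K B) =? 0)%Z with false by (symmetry; apply Z.eqb_neq; lia).
      simpl app. auto. }
  unfold Hwin. rewrite EK. destruct (Z.eqb (K w2) 0); [|symmetry; apply Csum_zero_if].
  destruct (Nat.eqb b d) eqn:Ebd.
  - f_equal. apply zprod_ext. intros x _. rewrite EO. destruct (Z.eqb x (K B)); auto.
  - unfold RtoC, C0; f_equal. apply (zprod_zero _ _ _ (K B)).
    + pose proof (K_bnd B). assert (bnd B <= bnd w1)%nat by (unfold w1; rewrite bnd_app; simpl; rewrite bnd_app; simpl; lia). lia.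
    + rewrite EO, Z.eqb_refl. reflexivity.
Qed.

(* valley: in time, us c d goes down then u a b comes back *)
Lemma H_valley : forall A S B a b c d, stayle S ->
  Hs n (A ++ Mv (mkgen false a b) :: S ++ Mv (mkgen true c d) :: B) =
  if Nat.eqb a c then Hs n (A ++ shift (-1) S ++ Sy (-1) b d :: B) else C0.
Proof. intros A S B a b c d HS.
  set (w1 := A ++ Mv (mkgen false a b) :: S ++ Mv (mkgen true c d) :: B).
  set (w2 := A ++ shift (-1) S ++ Sy (-1) b d :: B).
  set (N := (bnd w1 + bnd w2)%nat).
  assert (HSa := stayle_all S HS).
  rewrite <- (Hwin_indep n w1 N), <- (Hwin_indep n w2 N) by lia.
  assert (EK : K w1 = K w2).
  { unfold w1, w2. repeat first [rewrite K_app | rewrite K_cons].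
    rewrite (K_stays S), (K_stays (shift _ S)) by (auto; apply shift_all; auto).
    cbn [dK st]; lia. }
  assert (KS1 : K (S ++ Mv (mkgen true c d) :: B) = (-1 + K B)%Z) by (rewrite K_app, K_cons, K_stays by auto; cbn [dK st]; lia).
  assert (KS2 : K (shift (-1) S ++ Sy (-1) b d :: B) = K B) by (rewrite K_app, K_cons, K_stays by (apply shift_all; auto); cbn [dK st]; lia).
  assert (EO : forall x, red (O w1 x) = if Z.eqb x (K B - 1) then (if Nat.eqb a c then red (O w2 x) else None) else red (O w2 x)).
  { intro x. unfold w1, w2. repeat first [rewrite O_app | rewrite O_cons].
    repeat first [rewrite K_app | rewrite K_cons]. rewrite O_shift by auto.
    rewrite (K_stays S), (K_stays (shift _ S)) by (auto; apply shift_all; auto).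
    cbn [lop st gi gj dK].
    replace (x - (1 + (0 + (-1 + K B))))%Z with (x - K B)%Z by lia.
    replace (x - (0 + (-1 + K B)))%Z with (x - K B + 1)%Z by lia.
    replace (x - (-1 + K B))%Z with (x - K B + 1)%Z by lia.
    replace (x - (0 + (0 + K B)))%Z with (x - K B)%Z by lia.
    replace (x - (0 + K B) - -1)%Z with (x - K B + 1)%Z by lia.
    destruct (Z.eqb_spec x (K B - 1)).
    - replace (x - K B)%Z with (-1)%Z by lia. replace (-1 + 1)%Z with 0%Z by lia. simpl Z.eqb.
      rewrite O_stayle by auto. simpl app.
      rewrite !red_app.
      change (red ((b,a) :: (c,d) :: O B x)) with (comb (Some (Some (b,a))) (comb (Some (Some (c,d))) (red (O B x)))).
      change (red ((b,d) :: O B x)) with (comb (Some (Some (b,d))) (red (O B x))).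
      rewrite (comb_assoc (Some (Some (b,a)))). simpl comb at 2.
      destruct (Nat.eqb a c); auto. simpl comb at 2. rewrite comb_None_r; auto.
    - replace ((x - K B + 1) =? 0)%Z with false by (symmetry; apply Z.eqb_neq; lia).
      replace ((x - K B) =? -1)%Z with false by (symmetry; apply Z.eqb_neq; lia).
      simpl app. auto. }
  unfold Hwin. rewrite EK. destruct (Z.eqb (K w2) 0); [|symmetry; apply Csum_zero_if].
  destruct (Nat.eqb a c) eqn:Ebd.
  - f_equal. apply zprod_ext. intros x _. rewrite EO. destruct (Z.eqb x (K B - 1)); auto.
  - unfold RtoC, C0; f_equal. apply (zprod_zero _ _ _ (K B - 1)).
    + pose proof (K_bnd B). assert (bnd B + 1 <= bnd w1)%nat by (unfold w1; rewrite bnd_app; simpl; rewrite bnd_app; simpl; lia). lia.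
    + rewrite EO, Z.eqb_refl. reflexivity.
Qed.
End Merge.


Section S4.
Variable n : nat.
Hypothesis Hn : (0 < n)%nat.

Lemma in_seq0 : forall k, In k (seq 0 n) -> (k < n)%nat.
Proof. intros k Hk; apply in_seq in Hk; lia. Qed.

Lemma tv_sum : forall x y, svalid n x -> svalid n y ->
  Rsum (map (fun k => tv n (comb x (comb (Some (Some (k,k))) y))) (seq 0 n)) = tv n (comb x y).
Proof. intros [[[p q]|]|] [[[r s]|]|]; unfold svalid, pvalid; simpl fst; simpl snd; intros Hx Hy.
  - rewrite (Rsum_ext _ (fun k => if Nat.eqb k r then tv n (comb (Some (Some (p, q))) (Some (Some (r, s)))) else 0)).
    + apply Rsum_delta0; lia.
    + intros k Hk. simpl. destruct (Nat.eqb_spec k r); subst; auto.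
  - rewrite (Rsum_ext _ (fun k => if Nat.eqb k q then tv n (Some (Some (p, q))) else 0)).
    + apply Rsum_delta0; lia.
    + intros k Hk. simpl. destruct (Nat.eqb_spec k q); destruct (Nat.eqb_spec q k); subst; auto; lia.
  - rewrite (Rsum_ext _ (fun _ => 0)). rewrite Rsum_const; simpl; ring.
    intros k Hk. simpl. destruct (Nat.eqb q k); auto.
  - rewrite (Rsum_ext _ (fun k => if Nat.eqb k r then tv n (Some (Some (r, s))) else 0)).
    + apply Rsum_delta0; lia.
    + intros k Hk. simpl. destruct (Nat.eqb_spec k r); subst; auto.
  - rewrite (Rsum_ext _ (fun _ => / INR n)). rewrite Rsum_const, length_seq. simpl. field.
    apply not_0_INR; lia.
    intros k Hk. apply in_seq0 in Hk. simpl. rewrite Nat.eqb_refl.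
    replace (k <? n)%nat with true by (symmetry; apply Nat.ltb_lt; lia). auto.
  - rewrite (Rsum_ext _ (fun _ => 0)). rewrite Rsum_const; simpl; ring. intros; auto.
  - rewrite (Rsum_ext _ (fun _ => 0)). rewrite Rsum_const; simpl; ring. intros; auto.
  - rewrite (Rsum_ext _ (fun _ => 0)). rewrite Rsum_const; simpl; ring. intros; auto.
  - rewrite (Rsum_ext _ (fun _ => 0)). rewrite Rsum_const; simpl; ring. intros; auto.
Qed.

Lemma H_sum_stay : forall A B e, xvalid n A -> xvalid n B ->
  Csum (map (fun k => Hs n (A ++ Sy e k k :: B)) (seq 0 n)) = Hs n (A ++ B).
Proof. intros A B e HA HB.
  set (N := (bnd A + bnd B + S (Z.to_nat (Z.abs e)))%nat).
  rewrite (Csum_map_ext _ (fun k => Hwin n N (A ++ Sy e k k :: B))).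
  2:{ intros k _. symmetry. apply Hwin_indep. rewrite bnd_app. simpl. lia. }
  rewrite <- (Hwin_indep n (A ++ B) N) by (rewrite bnd_app; lia).
  rewrite (Csum_map_ext _ (fun k => if Z.eqb (K (A ++ B)) 0 then RtoC (zprod (fun x => tv n (red (O (A ++ Sy e k k :: B) x))) (- Z.of_nat N) (2 * N + 1)) else C0)).
  2:{ intros; unfold Hwin; rewrite !K_app, K_cons; cbn [dK]; rewrite Z.add_0_l; reflexivity. }
  unfold Hwin.
  destruct (Z.eqb (K (A ++ B)) 0).
  2:{ apply Csum_map_zero. }
  rewrite Csum_RtoC. f_equal.
  set (x0 := (K B + e)%Z).
  pose proof (K_bnd B).
  assert (Hx0 : (- Z.of_nat N <= x0 < - Z.of_nat N + Z.of_nat (2 * N + 1))%Z) by (unfold x0; lia).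
  set (g0 := fun x => tv n (red (O (A ++ B) x))).
  assert (Eg : forall k x, x <> x0 -> tv n (red (O (A ++ Sy e k k :: B) x)) = g0 x).
  { intros k x Hx. unfold g0. rewrite !O_app, O_cons, K_cons. cbn [dK lop]. rewrite Z.add_0_l.
    replace (Z.eqb (x - K B) e) with false by (symmetry; apply Z.eqb_neq; unfold x0 in Hx; lia). auto. }
  rewrite (zprod_split g0 _ _ x0 Hx0).
  rewrite (Rsum_ext _ (fun k => (zprod g0 (- Z.of_nat N) (Z.to_nat (x0 - - Z.of_nat N)) *
       zprod g0 (x0 + 1) (2 * N + 1 - Z.to_nat (x0 - - Z.of_nat N) - 1)) *
       tv n (red (O (A ++ Sy e k k :: B) x0)))).
  2:{ intros k _. rewrite (zprod_split _ _ _ x0 Hx0).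
      rewrite (zprod_ext _ g0 (Z.to_nat _)), (zprod_ext _ g0 (_ - _ - _)%nat). ring.
      intros x Hx; apply Eg; lia. intros x Hx; apply Eg; lia. }
  rewrite Rsum_mull.
  rewrite (Rsum_ext _ (fun k => tv n (comb (red (O A (x0 - K B))) (comb (Some (Some (k,k))) (red (O B x0)))))).
  2:{ intros k _. rewrite !O_app, O_cons, K_cons. cbn [dK lop]. rewrite Z.add_0_l.
      replace (Z.eqb (x0 - K B) e) with true by (symmetry; apply Z.eqb_eq; unfold x0; lia).
      rewrite red_app. reflexivity. }
  rewrite tv_sum by (apply red_valid, O_valid; auto).
  unfold g0. rewrite O_app, red_app. ring.
Qed.
End S4.


Section S5.
Variable n : nat.
Hypothesis Hn : (0 < n)%nat.

Lemma valid_xvalid : forall w, valid n w -> xvalid n (map Mv w).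
Proof. induction 1; constructor; auto. Qed.

Lemma haar_nil : haar n [] = C1.
Proof. rewrite haar_H by auto. unfold Hs, Hwin. simpl. unfold RtoC, C1. f_equal. ring. Qed.

Lemma haar_tracial : tracial n (haar n).
Proof. intros v w Hv Hw. rewrite !haar_H by auto. rewrite !map_app.
  apply H_tracial; auto; apply valid_xvalid; auto. Qed.

Lemma haar_rel : respects_relations n (haar n).
Proof. intros a b i j Ha Hb Hi Hj. split; unfold Csum_n.
  - rewrite (Csum_map_ext _ (fun k => if Nat.eqb i j then Hs n (map Mv a ++ Sy 0 k k :: map Mv b) else C0)).
    + rewrite haar_H by auto. rewrite map_app. unfold delta. destruct (Nat.eqb i j).
      * rewrite H_sum_stay by (auto; apply valid_xvalid; auto). Csolve.
      * rewrite Csum_map_zero. Csolve.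
    + intros k _. rewrite haar_H by auto.
      replace (map Mv (a ++ [us k i; u k j] ++ b)) with
        (map Mv a ++ Mv (mkgen true k i) :: [] ++ Mv (mkgen false k j) :: map Mv b)
        by (rewrite !map_app; reflexivity).
      rewrite H_peak by constructor. reflexivity.
  - rewrite (Csum_map_ext _ (fun k => if Nat.eqb i j then Hs n (map Mv a ++ Sy (-1) k k :: map Mv b) else C0)).
    + rewrite haar_H by auto. rewrite map_app. unfold delta. destruct (Nat.eqb i j).
      * rewrite H_sum_stay by (auto; apply valid_xvalid; auto). Csolve.
      * rewrite Csum_map_zero. Csolve.
    + intros k _. rewrite haar_H by auto.
      replace (map Mv (a ++ [u i k; us j k] ++ b)) with
        (map Mv a ++ Mv (mkgen false i k) :: [] ++ Mv (mkgen true j k) :: map Mv b)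
        by (rewrite !map_app; reflexivity).
      rewrite H_valley by constructor. reflexivity.
Qed.
End S5.


Fixpoint nmv (w : list xg) : nat :=
  match w with [] => 0%nat | Mv _ :: w' => S (nmv w') | Sy _ _ _ :: w' => nmv w' end.
Lemma nmv_app : forall v w, nmv (v ++ w) = (nmv v + nmv w)%nat.
Proof. induction v as [|[g|d a c] v IH]; simpl; intros; auto. Qed.
Lemma nmv_stays : forall S, allstay S -> nmv S = 0%nat.
Proof. induction 1; simpl; auto. destruct x; try contradiction; auto. Qed.

Lemma ktuples_prop : forall n m ks, In ks (ktuples n m) -> length ks = m /\ Forall (fun k => (k < n)%nat) ks.
Proof. induction m; simpl; intros ks Hk.
  - destruct Hk as [<-|[]]; simpl; auto.
  - apply in_flat_map in Hk as [k [Hk1 Hk2]]. apply in_map_iff in Hk2 as [ks' [<- Hks']].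
    apply IHm in Hks' as [H1 H2]. apply in_seq in Hk1. simpl; split; auto. constructor; auto; lia.
Qed.

Lemma ktuples_split : forall n a b (F : list nat -> C),
  Csum (map F (ktuples n (a + b))) =
  Csum (map (fun ks1 => Csum (map (fun ks2 => F (ks1 ++ ks2)) (ktuples n b))) (ktuples n a)).
Proof. induction a; intros; simpl.
  - assert (Cadd0 : forall z, Cadd z C0 = z) by (intros; Csolve). rewrite Cadd0. reflexivity.
  - rewrite !Csum_flat_map. apply Csum_map_ext. intros k _.
    rewrite !Csum_map_map. rewrite (IHa b (fun ks => F (k :: ks))). reflexivity.
Qed.

Lemma Csum_delta : forall n (f : nat -> C) k1, (k1 < n)%nat ->
  Csum (map (fun k2 => if Nat.eqb k1 k2 then f k2 else C0) (seq 0 n)) = f k1.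
Proof. intros. assert (forall s m, Csum (map (fun k2 => if Nat.eqb k1 k2 then f k2 else C0) (seq s m)) =
   if (s <=? k1)%nat && (k1 <? s + m)%nat then f k1 else C0).
  { intros s m; revert s; induction m; intros; simpl.
    - destruct (s <=? k1)%nat eqn:E1; destruct (k1 <? s + 0)%nat eqn:E2; simpl; auto.
      apply Nat.leb_le in E1; apply Nat.ltb_lt in E2; lia.
    - rewrite IHm. destruct (Nat.eqb_spec k1 s).
      + subst. replace ((S s <=? s)%nat) with false by (symmetry; apply Nat.leb_gt; lia).
        replace ((s <=? s)%nat) with true by (symmetry; apply Nat.leb_le; lia).
        replace ((s <? s + S m)%nat) with true by (symmetry; apply Nat.ltb_lt; lia). simpl. Csolve.
      + destruct (S s <=? k1)%nat eqn:E1; destruct (k1 <? S s + m)%nat eqn:E2;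
        destruct (s <=? k1)%nat eqn:E3; destruct (k1 <? s + S m)%nat eqn:E4; simpl;
        repeat match goal with H : (_ <=? _)%nat = true |- _ => apply Nat.leb_le in H
          | H : (_ <=? _)%nat = false |- _ => apply Nat.leb_gt in H
          | H : (_ <? _)%nat = true |- _ => apply Nat.ltb_lt in H
          | H : (_ <? _)%nat = false |- _ => apply Nat.ltb_ge in H end; try (Csolve); lia. }
  rewrite H0. replace ((0 <=? k1)%nat) with true by (symmetry; apply Nat.leb_le; lia).
  replace ((k1 <? 0 + n)%nat) with true by (symmetry; apply Nat.ltb_lt; lia). auto.
Qed.

Definition offge (w : list xg) := Forall (fun x => match x with Sy d _ _ => (0 <= d)%Z | _ => True end) w.
Definition offle (w : list xg) := Forall (fun x => match x with Sy d _ _ => (d <= -1)%Z | _ => True end) w.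
Definition nos (s : bool) (w : list xg) := Forall (fun x => match x with Mv g => st g <> s | _ => True end) w.

Lemma first_mv : forall W, allstay W \/ exists S g Y, W = S ++ Mv g :: Y /\ allstay S.
Proof. induction W as [|x W IH]. left; constructor.
  destruct x as [g|d a c].
  - right. exists [], g, W. split; auto. constructor.
  - destruct IH as [IH|[S [g [Y [-> HS]]]]].
    + left. constructor; auto.
    + right. exists (Sy d a c :: S), g, Y. split; auto. constructor; auto.
Qed.

Lemma last_mv : forall W, (0 < nmv W)%nat -> exists Z g S, W = Z ++ Mv g :: S /\ allstay S.
Proof. induction W as [|x W IH]; simpl; intros Hm. lia.
  destruct (Nat.eq_dec (nmv W) 0) as [E|E].
  - destruct x as [g|d a c]; [|simpl in Hm; lia].
    exists [], g, W. split; auto. destruct (first_mv W) as [H|[S [g' [Y [-> _]]]]]; auto.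
    rewrite nmv_app in E. simpl in E. lia.
  - destruct IH as [Z [g [S [-> HS]]]]. lia. exists (x :: Z), g, S. split; auto.
Qed.

Lemma pattern : forall s0 w,
  (exists X g1 S g2 Y, w = X ++ Mv g1 :: S ++ Mv g2 :: Y /\ st g1 = s0 /\ st g2 = negb s0 /\ allstay S) \/
  (exists W1 W2, w = W1 ++ W2 /\ nos s0 W1 /\ nos (negb s0) W2).
Proof. intros s0. induction w as [|x w IH].
  - right. exists [], []. repeat split; constructor.
  - destruct IH as [[X [g1 [S [g2 [Y [-> [H1 [H2 H3]]]]]]]]|[W1 [W2 [-> [H1 H2]]]]].
    + left. exists (x :: X), g1, S, g2, Y. auto.
    + destruct x as [g|d a c].
      * destruct (Bool.bool_dec (st g) s0) as [E|E].
        -- destruct (first_mv W1) as [HW|[S [g2 [Y [-> HS]]]]].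
           ++ right. exists [], (Mv g :: W1 ++ W2). repeat split; try constructor.
              rewrite E; destruct s0; discriminate.
              apply Forall_app; split; auto.
              eapply Forall_impl; [|exact HW]. intros [g'|]; simpl; tauto.
           ++ left. exists [], g, S, g2, (Y ++ W2). split; [simpl; rewrite <- app_assoc; auto|].
              repeat split; auto. apply Forall_app in H1 as [_ H1]. inversion H1; subst.
              destruct (st g2), (st g); simpl in *; congruence.
        -- right. exists (Mv g :: W1), W2. repeat split; auto. constructor; auto.
      * right. exists (Sy d a c :: W1), W2. repeat split; auto. constructor; auto.
Qed.

Lemma K_nos : forall s W, nos s W -> K W = (if s then Z.of_nat (nmv W) else - Z.of_nat (nmv W))%Z.
Proof. intros s W HW. induction HW as [|x W Hx HW IH]; [destruct s; reflexivity|].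
  destruct x as [g|d a c]; cbn [K nmv dK]; rewrite IH.
  - destruct (st g), s; try congruence; lia.
  - lia.
Qed.

Lemma rotate_pattern : forall s0 w, K w = 0%Z -> (0 < nmv w)%nat ->
  exists v1 v2 g1 S g2 B, w = v1 ++ v2 /\ v2 ++ v1 = Mv g1 :: S ++ Mv g2 :: B /\
    st g1 = s0 /\ st g2 = negb s0 /\ allstay S.
Proof. intros s0 w HK Hm. destruct (pattern s0 w) as [[X [g1 [S [g2 [Y [-> [H1 [H2 H3]]]]]]]]|[W1 [W2 [-> [H1 H2]]]]].
  - exists X, (Mv g1 :: S ++ Mv g2 :: Y), g1, S, g2, (Y ++ X). repeat split; auto.
    simpl. rewrite <- app_assoc. reflexivity.
  - rewrite K_app, (K_nos _ _ H1), (K_nos _ _ H2) in HK. rewrite nmv_app in Hm.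
    assert (E : nmv W1 = nmv W2) by (destruct s0; simpl in HK; lia).
    destruct (first_mv W1) as [HW|[S1 [g2 [Z1 [-> HS1]]]]].
    { pose proof (nmv_stays _ HW). lia. }
    destruct (last_mv W2) as [Z2 [g1 [S2 [-> HS2]]]]. lia.
    exists (S1 ++ Mv g2 :: Z1 ++ Z2), (Mv g1 :: S2), g1, (S2 ++ S1), g2, (Z1 ++ Z2).
    repeat split.
    + rewrite <- !app_assoc. simpl. rewrite <- !app_assoc. auto.
    + simpl. rewrite <- !app_assoc. auto.
    + apply Forall_app in H2 as [_ H2]. inversion H2; subst. destruct (st g1), s0; simpl in *; congruence.
    + apply Forall_app in H1 as [_ H1]. inversion H1; subst. destruct (st g2), s0; simpl in *; congruence.
    + apply Forall_app; auto.
Qed.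


Fixpoint xL (w : list xg) (ks : list nat) : list xg :=
  match w with
  | [] => []
  | Mv g :: w' => match ks with [] => [] | k :: ks' => Mv (mkgen (st g) (gi g) k) :: xL w' ks' end
  | Sy d a c :: w' => Sy d a c :: xL w' ks
  end.
Fixpoint xR (w : list xg) (ks : list nat) : word :=
  match w with
  | [] => []
  | Mv g :: w' => match ks with [] => [] | k :: ks' => mkgen (st g) k (gj g) :: xR w' ks' end
  | Sy d a c :: w' => xR w' ks
  end.

Lemma xL_app : forall v w ks1 ks2, length ks1 = nmv v -> xL (v ++ w) (ks1 ++ ks2) = xL v ks1 ++ xL w ks2.
Proof. induction v as [|[g|d a c] v IH]; intros w ks1 ks2 Hl; simpl in *.
  - destruct ks1; simpl in *; auto; lia.
  - destruct ks1; simpl in *; [lia|]. rewrite IH; auto.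
  - rewrite IH; auto.
Qed.
Lemma xR_app : forall v w ks1 ks2, length ks1 = nmv v -> xR (v ++ w) (ks1 ++ ks2) = xR v ks1 ++ xR w ks2.
Proof. induction v as [|[g|d a c] v IH]; intros w ks1 ks2 Hl; simpl in *.
  - destruct ks1; simpl in *; auto; lia.
  - destruct ks1; simpl in *; [lia|]. rewrite IH; auto.
  - rewrite IH; auto.
Qed.
Lemma xL_stays : forall S w ks, allstay S -> xL (S ++ w) ks = S ++ xL w ks.
Proof. induction 1; simpl; auto. destruct x; try contradiction. rewrite IHForall; auto. Qed.
Lemma xR_stays : forall S w ks, allstay S -> xR (S ++ w) ks = xR w ks.
Proof. induction 1; simpl; auto. destruct x; try contradiction. auto. Qed.
Lemma K_xL : forall w ks, length ks = nmv w -> K (xL w ks) = K w.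
Proof. induction w as [|[g|d a c] w IH]; intros ks Hl; simpl in *; auto.
  destruct ks; simpl in *; [lia|]. rewrite IH; auto. Qed.
Lemma nmv_zero_xL : forall w, nmv w = 0%nat -> xL w [] = w /\ xR w [] = [].
Proof. induction w as [|[g|d a c] w IH]; simpl; intros; auto; try lia.
  destruct IH as [-> ->]; auto. Qed.

Lemma stayge_of : forall S, allstay S -> offge S -> stayge S.
Proof. induction 1 as [|x S Hx HS IHS]; intros Ho; constructor; inversion Ho; subst;
  [destruct x; simpl in *; auto; contradiction | apply IHS; auto]. Qed.
Lemma stayle_of : forall S, allstay S -> offle S -> stayle S.
Proof. induction 1 as [|x S Hx HS IHS]; intros Ho; constructor; inversion Ho; subst;
  [destruct x; simpl in *; auto; contradiction | apply IHS; auto]. Qed.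
Lemma xvalid_shift : forall n e S, allstay S -> xvalid n S -> xvalid n (shift e S).
Proof. induction 1 as [|x S Hx HS IHS]; intros Ho; constructor; inversion Ho; subst;
  [destruct x; simpl in *; auto; contradiction | apply IHS; auto]. Qed.
Lemma offge_shift1 : forall S, allstay S -> offge S -> offge (shift 1 S).
Proof. induction 1 as [|x S Hx HS IHS]; intros Ho; constructor; inversion Ho; subst;
  [destruct x; simpl in *; auto; try contradiction; lia | apply IHS; auto]. Qed.
Lemma offle_shiftm1 : forall S, allstay S -> offle S -> offle (shift (-1) S).
Proof. induction 1 as [|x S Hx HS IHS]; intros Ho; constructor; inversion Ho; subst;
  [destruct x; simpl in *; auto; try contradiction; lia | apply IHS; auto]. Qed.

Section S7.
Variable n : nat.
Hypothesis Hn : (0 < n)%nat.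
Variable phi : functional.
Hypothesis Hphi0 : phi [] = C1.
Hypothesis Hrel : respects_relations n phi.
Hypothesis Htr : tracial n phi.

Lemma xvalid_xL : forall w ks, xvalid n w -> Forall (fun k => (k < n)%nat) ks -> xvalid n (xL w ks).
Proof. unfold xvalid. induction w as [|[g|d a c] w IH]; intros ks Hw Hks; simpl.
  - constructor.
  - inversion Hw; subst. destruct ks as [|k ks]; [constructor|]. inversion Hks; subst.
    constructor; [simpl; tauto| apply IH; auto].
  - inversion Hw; subst. constructor; auto.
Qed.
Lemma valid_xR : forall w ks, xvalid n w -> Forall (fun k => (k < n)%nat) ks -> valid n (xR w ks).
Proof. unfold xvalid, valid. induction w as [|[g|d a c] w IH]; intros ks Hw Hks; simpl.
  - constructor.
  - inversion Hw; subst. destruct ks as [|k ks]; [constructor|]. inversion Hks; subst.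
    constructor; [simpl; tauto| apply IH; auto].
  - inversion Hw; subst. auto.
Qed.

Definition CS (w : list xg) : C :=
  Csum (map (fun ks => Cmul (Hs n (xL w ks)) (phi (xR w ks))) (ktuples n (nmv w))).

Lemma CS_rot : forall v w, xvalid n v -> xvalid n w -> CS (v ++ w) = CS (w ++ v).
Proof. intros v w Hv Hw. unfold CS. rewrite !nmv_app. rewrite !ktuples_split.
  rewrite Csum_swap. apply Csum_map_ext. intros ks2 H2. apply Csum_map_ext. intros ks1 H1.
  apply ktuples_prop in H1 as [L1 F1]. apply ktuples_prop in H2 as [L2 F2].
  rewrite xL_app, xR_app, xL_app, xR_app by auto.
  rewrite H_tracial by (auto; apply xvalid_xL; auto).
  rewrite Htr by (apply valid_xR; auto). reflexivity.
Qed.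

Lemma CS_peak : forall g1 S g2 B, xvalid n (Mv g1 :: S ++ Mv g2 :: B) -> st g1 = true -> st g2 = false ->
  stayge S -> CS (shift 1 S ++ Sy 0 (gi g1) (gi g2) :: B) = Hs n (shift 1 S ++ Sy 0 (gi g1) (gi g2) :: B) ->
  CS (Mv g1 :: S ++ Mv g2 :: B) = Hs n (Mv g1 :: S ++ Mv g2 :: B).
Proof. intros [s1 a b] S [s2 c d] B Hv Hs1 Hs2 HS IH. simpl in Hs1, Hs2; subst.
  assert (HSa := stayge_all S HS).
  assert (HvB : xvalid n B /\ (a < n /\ b < n /\ c < n /\ d < n)%nat).
  { inversion Hv; subst. apply xvalid_app in H2 as [_ H2]. inversion H2; subst. simpl in *. tauto. }
  destruct HvB as [HvB [Ha [Hb [Hc Hd]]]].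
  unfold CS. cbn [nmv]. rewrite nmv_app, nmv_stays by auto. cbn [nmv]. rewrite Nat.add_0_l.
  change (Hs n (Mv {| st := true; gi := a; gj := b |} :: S ++ Mv {| st := false; gi := c; gj := d |} :: B))
    with (Hs n ([] ++ Mv (mkgen true a b) :: S ++ Mv (mkgen false c d) :: B)).
  rewrite H_peak by auto. simpl app.
  cbn [ktuples]. rewrite Csum_flat_map.
  rewrite (Csum_map_ext _ (fun k1 => Csum (map (fun ks => Cmul (Hs n (shift 1 S ++ Sy 0 a c :: xL B ks))
        (phi ([] ++ [us k1 b; u k1 d] ++ xR B ks))) (ktuples n (nmv B))))).
  2:{ intros k1 Hk1. apply in_seq in Hk1. rewrite Csum_map_map, Csum_flat_map.
      rewrite (Csum_map_ext _ (fun k2 => if Nat.eqb k1 k2 then Csum (map (fun ks => Cmul (Hs n (shift 1 S ++ Sy 0 a c :: xL B ks))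
        (phi ([] ++ [us k1 b; u k1 d] ++ xR B ks))) (ktuples n (nmv B))) else C0)).
      - rewrite Csum_delta by lia. reflexivity.
      - intros k2 _. rewrite Csum_map_map. destruct (Nat.eqb_spec k1 k2).
        + subst. apply Csum_map_ext. intros ks _. cbn [xL xR]. rewrite xL_stays, xR_stays by auto. cbn [xL xR st gi gj].
          change (Hs n (Mv {| st := true; gi := a; gj := k2 |} :: S ++ Mv {| st := false; gi := c; gj := k2 |} :: xL B ks))
           with (Hs n ([] ++ Mv (mkgen true a k2) :: S ++ Mv (mkgen false c k2) :: xL B ks)).
          rewrite H_peak by auto. rewrite Nat.eqb_refl. reflexivity.
        + rewrite (Csum_map_ext _ (fun _ => C0)). apply Csum_map_zero.
          intros ks _. cbn [xL xR]. rewrite xL_stays by auto. cbn [xL xR st gi gj].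
          change (Hs n (Mv {| st := true; gi := a; gj := k1 |} :: S ++ Mv {| st := false; gi := c; gj := k2 |} :: xL B ks))
           with (Hs n ([] ++ Mv (mkgen true a k1) :: S ++ Mv (mkgen false c k2) :: xL B ks)).
          rewrite H_peak by auto. replace (Nat.eqb k1 k2) with false by (symmetry; apply Nat.eqb_neq; auto).
          Csolve. }
  rewrite Csum_swap.
  rewrite (Csum_map_ext _ (fun ks => Cmul (delta b d) (Cmul (Hs n (shift 1 S ++ Sy 0 a c :: xL B ks)) (phi (xR B ks))))).
  2:{ intros ks Hks. apply ktuples_prop in Hks as [_ Fk].
      rewrite Csum_map_mull. unfold Csum_n in Hrel.
      destruct (Hrel [] (xR B ks) b d) as [R1 _]; auto. constructor. apply valid_xR; auto.
      unfold Csum_n in R1. rewrite R1. simpl app. Csolve. }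
  rewrite Csum_map_mull.
  assert (E : Csum (map (fun ks => Cmul (Hs n (shift 1 S ++ Sy 0 a c :: xL B ks)) (phi (xR B ks))) (ktuples n (nmv B)))
     = CS (shift 1 S ++ Sy 0 a c :: B)).
  { unfold CS. rewrite nmv_app, (nmv_stays (shift 1 S)) by (apply shift_all; auto). simpl (nmv (Sy 0 a c :: B)).
    apply Csum_map_ext. intros ks _. rewrite xL_stays, xR_stays by (apply shift_all; auto). reflexivity. }
  rewrite E. cbn [gi] in IH. rewrite IH. unfold delta. destruct (Nat.eqb b d); Csolve.
Qed.

Lemma CS_main : forall m w, nmv w = m -> xvalid n w -> offge w -> CS w = Hs n w.
Proof. intro m. induction m as [m IHm] using (well_founded_induction lt_wf). intros w Hm Hv Ho.
  destruct (Nat.eq_dec m 0) as [E|E].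
  - rewrite E in Hm. unfold CS. rewrite Hm. simpl. destruct (nmv_zero_xL w Hm) as [-> ->]. rewrite Hphi0. Csolve.
  - destruct (Z.eq_dec (K w) 0) as [EK|EK].
    2:{ unfold CS. assert (Hs n w = C0) as ->.
        { unfold Hs, Hwin. replace (Z.eqb (K w) 0) with false by (symmetry; apply Z.eqb_neq; auto). auto. }
        rewrite (Csum_map_ext _ (fun _ => C0)). apply Csum_map_zero.
        intros ks Hks. apply ktuples_prop in Hks as [Lk _].
        unfold Hs, Hwin. rewrite K_xL by auto. replace (Z.eqb (K w) 0) with false by (symmetry; apply Z.eqb_neq; auto).
        Csolve. }
    destruct (rotate_pattern true w EK) as [v1 [v2 [g1 [S [g2 [B [-> [Hrot [H1 [H2 HS]]]]]]]]]]; [lia|].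
    apply xvalid_app in Hv as [Hv1 Hv2].
    rewrite CS_rot, H_tracial by auto. rewrite Hrot.
    assert (Hv' : xvalid n (Mv g1 :: S ++ Mv g2 :: B)) by (rewrite <- Hrot; apply xvalid_app; auto).
    assert (Ho' : offge (Mv g1 :: S ++ Mv g2 :: B)) by (rewrite <- Hrot; unfold offge in *; apply Forall_app in Ho; apply Forall_app; tauto).
    assert (HSge : stayge S).
    { inversion Ho'; subst. apply Forall_app in H4 as [H4 _]. apply stayge_of; auto. }
    apply CS_peak; auto.
    apply (IHm (nmv B)).
    + rewrite <- Hm, nmv_app. rewrite Nat.add_comm, <- nmv_app, Hrot. cbn [nmv]. rewrite nmv_app. rewrite (nmv_stays S HS). cbn [nmv]. lia.
    + rewrite nmv_app, nmv_stays by (apply shift_all; auto). auto.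
    + inversion Hv'; subst. apply xvalid_app in H4 as [H4 H5]. inversion H5; subst.
      apply xvalid_app. split.
      * apply xvalid_shift; auto.
      * constructor; auto. simpl in *. tauto.
    + inversion Ho'; subst. apply Forall_app in H4 as [H4 H5]. inversion H5; subst.
      apply Forall_app. split.
      * apply offge_shift1; auto.
      * constructor; auto. simpl; lia.
Qed.
End S7.


Fixpoint xL2 (w : list xg) (ks : list nat) : word :=
  match w with
  | [] => []
  | Mv g :: w' => match ks with [] => [] | k :: ks' => mkgen (st g) (gi g) k :: xL2 w' ks' end
  | Sy d a c :: w' => xL2 w' ks
  end.
Fixpoint xR2 (w : list xg) (ks : list nat) : list xg :=
  match w with
  | [] => []
  | Mv g :: w' => match ks with [] => [] | k :: ks' => Mv (mkgen (st g) k (gj g)) :: xR2 w' ks' end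
  | Sy d a c :: w' => Sy d a c :: xR2 w' ks
  end.

Lemma xL2_app : forall v w ks1 ks2, length ks1 = nmv v -> xL2 (v ++ w) (ks1 ++ ks2) = xL2 v ks1 ++ xL2 w ks2.
Proof. induction v as [|[g|d a c] v IH]; intros w ks1 ks2 Hl; simpl in *.
  - destruct ks1; simpl in *; auto; lia.
  - destruct ks1; simpl in *; [lia|]. rewrite IH; auto.
  - rewrite IH; auto.
Qed.
Lemma xR2_app : forall v w ks1 ks2, length ks1 = nmv v -> xR2 (v ++ w) (ks1 ++ ks2) = xR2 v ks1 ++ xR2 w ks2.
Proof. induction v as [|[g|d a c] v IH]; intros w ks1 ks2 Hl; simpl in *.
  - destruct ks1; simpl in *; auto; lia.
  - destruct ks1; simpl in *; [lia|]. rewrite IH; auto.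
  - rewrite IH; auto.
Qed.
Lemma xR2_stays : forall S w ks, allstay S -> xR2 (S ++ w) ks = S ++ xR2 w ks.
Proof. induction 1; simpl; auto. destruct x; try contradiction. rewrite IHForall; auto. Qed.
Lemma xL2_stays : forall S w ks, allstay S -> xL2 (S ++ w) ks = xL2 w ks.
Proof. induction 1; simpl; auto. destruct x; try contradiction. auto. Qed.
Lemma K_xR2 : forall w ks, length ks = nmv w -> K (xR2 w ks) = K w.
Proof. induction w as [|[g|d a c] w IH]; intros ks Hl; simpl in *; auto.
  destruct ks; simpl in *; [lia|]. rewrite IH; auto. Qed.
Lemma nmv_zero_xR2 : forall w, nmv w = 0%nat -> xR2 w [] = w /\ xL2 w [] = [].
Proof. induction w as [|[g|d a c] w IH]; simpl; intros; auto; try lia.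
  destruct IH as [-> ->]; auto. Qed.

Lemma left_xL : forall w ks, length ks = length w -> map Mv (left_word w ks) = xL (map Mv w) ks.
Proof. induction w as [|a w IH]; intros [|k ks] L; simpl in L; try lia; auto.
  change (Mv (mkgen (st a) (gi a) k) :: map Mv (left_word w ks) = Mv (mkgen (st a) (gi a) k) :: xL (map Mv w) ks).
  rewrite IH; auto. Qed.
Lemma right_xR : forall w ks, length ks = length w -> right_word w ks = xR (map Mv w) ks.
Proof. induction w as [|a w IH]; intros [|k ks] L; simpl in L; try lia; auto.
  change (mkgen (st a) k (gj a) :: right_word w ks = mkgen (st a) k (gj a) :: xR (map Mv w) ks).
  rewrite IH; auto. Qed.
Lemma left_xL2 : forall w ks, length ks = length w -> left_word w ks = xL2 (map Mv w) ks.
Proof. induction w as [|a w IH]; intros [|k ks] L; simpl in L; try lia; auto.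
  change (mkgen (st a) (gi a) k :: left_word w ks = mkgen (st a) (gi a) k :: xL2 (map Mv w) ks).
  rewrite IH; auto. Qed.
Lemma right_xR2 : forall w ks, length ks = length w -> map Mv (right_word w ks) = xR2 (map Mv w) ks.
Proof. induction w as [|a w IH]; intros [|k ks] L; simpl in L; try lia; auto.
  change (Mv (mkgen (st a) k (gj a)) :: map Mv (right_word w ks) = Mv (mkgen (st a) k (gj a)) :: xR2 (map Mv w) ks).
  rewrite IH; auto. Qed.

Section S8.
Variable n : nat.
Hypothesis Hn : (0 < n)%nat.
Variable phi : functional.
Hypothesis Hphi0 : phi [] = C1.
Hypothesis Hrel : respects_relations n phi.
Hypothesis Htr : tracial n phi.

Lemma xvalid_xR2 : forall w ks, xvalid n w -> Forall (fun k => (k < n)%nat) ks -> xvalid n (xR2 w ks).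
Proof. unfold xvalid. induction w as [|[g|d a c] w IH]; intros ks Hw Hks; simpl.
  - constructor.
  - inversion Hw; subst. destruct ks as [|k ks]; [constructor|]. inversion Hks; subst.
    constructor; [simpl; tauto| apply IH; auto].
  - inversion Hw; subst. constructor; auto.
Qed.
Lemma valid_xL2 : forall w ks, xvalid n w -> Forall (fun k => (k < n)%nat) ks -> valid n (xL2 w ks).
Proof. unfold xvalid, valid. induction w as [|[g|d a c] w IH]; intros ks Hw Hks; simpl.
  - constructor.
  - inversion Hw; subst. destruct ks as [|k ks]; [constructor|]. inversion Hks; subst.
    constructor; [simpl; tauto| apply IH; auto].
  - inversion Hw; subst. auto.
Qed.

Definition CS2 (w : list xg) : C :=
  Csum (map (fun ks => Cmul (phi (xL2 w ks)) (Hs n (xR2 w ks))) (ktuples n (nmv w))).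

Lemma CS2_rot : forall v w, xvalid n v -> xvalid n w -> CS2 (v ++ w) = CS2 (w ++ v).
Proof. intros v w Hv Hw. unfold CS2. rewrite !nmv_app. rewrite !ktuples_split.
  rewrite Csum_swap. apply Csum_map_ext. intros ks2 H2. apply Csum_map_ext. intros ks1 H1.
  apply ktuples_prop in H1 as [L1 F1]. apply ktuples_prop in H2 as [L2 F2].
  rewrite xL2_app, xR2_app, xL2_app, xR2_app by auto.
  rewrite H_tracial by (auto; apply xvalid_xR2; auto).
  rewrite Htr by (apply valid_xL2; auto). reflexivity.
Qed.

Lemma CS2_valley : forall g1 S g2 B, xvalid n (Mv g1 :: S ++ Mv g2 :: B) -> st g1 = false -> st g2 = true ->
  stayle S -> CS2 (shift (-1) S ++ Sy (-1) (gj g1) (gj g2) :: B) = Hs n (shift (-1) S ++ Sy (-1) (gj g1) (gj g2) :: B) ->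
  CS2 (Mv g1 :: S ++ Mv g2 :: B) = Hs n (Mv g1 :: S ++ Mv g2 :: B).
Proof. intros [s1 a b] S [s2 c d] B Hv Hs1 Hs2 HS IH. simpl in Hs1, Hs2; subst.
  assert (HSa := stayle_all S HS).
  assert (HvB : xvalid n B /\ (a < n /\ b < n /\ c < n /\ d < n)%nat).
  { inversion Hv; subst. apply xvalid_app in H2 as [_ H2]. inversion H2; subst. simpl in *. tauto. }
  destruct HvB as [HvB [Ha [Hb [Hc Hd]]]].
  unfold CS2. cbn [nmv]. rewrite nmv_app, nmv_stays by auto. cbn [nmv]. rewrite Nat.add_0_l.
  change (Hs n (Mv {| st := false; gi := a; gj := b |} :: S ++ Mv {| st := true; gi := c; gj := d |} :: B))
    with (Hs n ([] ++ Mv (mkgen false a b) :: S ++ Mv (mkgen true c d) :: B)).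
  rewrite H_valley by auto. simpl app.
  cbn [ktuples]. rewrite Csum_flat_map.
  rewrite (Csum_map_ext _ (fun k1 => Csum (map (fun ks => Cmul
        (phi ([] ++ [u a k1; us c k1] ++ xL2 B ks)) (Hs n (shift (-1) S ++ Sy (-1) b d :: xR2 B ks))) (ktuples n (nmv B))))).
  2:{ intros k1 Hk1. apply in_seq in Hk1. rewrite Csum_map_map, Csum_flat_map.
      rewrite (Csum_map_ext _ (fun k2 => if Nat.eqb k1 k2 then Csum (map (fun ks => Cmul
        (phi ([] ++ [u a k1; us c k1] ++ xL2 B ks)) (Hs n (shift (-1) S ++ Sy (-1) b d :: xR2 B ks))) (ktuples n (nmv B))) else C0)).
      - rewrite Csum_delta by lia. reflexivity.
      - intros k2 _. rewrite Csum_map_map. destruct (Nat.eqb_spec k1 k2).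
        + subst. apply Csum_map_ext. intros ks _. cbn [xL2 xR2]. rewrite xL2_stays, xR2_stays by auto. cbn [xL2 xR2 st gi gj].
          change (Hs n (Mv {| st := false; gi := k2; gj := b |} :: S ++ Mv {| st := true; gi := k2; gj := d |} :: xR2 B ks))
           with (Hs n ([] ++ Mv (mkgen false k2 b) :: S ++ Mv (mkgen true k2 d) :: xR2 B ks)).
          rewrite H_valley by auto. rewrite Nat.eqb_refl. reflexivity.
        + rewrite (Csum_map_ext _ (fun _ => C0)). apply Csum_map_zero.
          intros ks _. cbn [xL2 xR2]. rewrite xR2_stays by auto. cbn [xL2 xR2 st gi gj].
          change (Hs n (Mv {| st := false; gi := k1; gj := b |} :: S ++ Mv {| st := true; gi := k2; gj := d |} :: xR2 B ks))
           with (Hs n ([] ++ Mv (mkgen false k1 b) :: S ++ Mv (mkgen true k2 d) :: xR2 B ks)).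
          rewrite H_valley by auto. replace (Nat.eqb k1 k2) with false by (symmetry; apply Nat.eqb_neq; auto).
          Csolve. }
  rewrite Csum_swap.
  rewrite (Csum_map_ext _ (fun ks => Cmul (delta a c) (Cmul (phi (xL2 B ks)) (Hs n (shift (-1) S ++ Sy (-1) b d :: xR2 B ks))))).
  2:{ intros ks Hks. apply ktuples_prop in Hks as [_ Fk].
      rewrite Csum_map_mulr. unfold Csum_n in Hrel.
      destruct (Hrel [] (xL2 B ks) a c) as [_ R1]; auto. constructor. apply valid_xL2; auto.
      unfold Csum_n in R1. rewrite R1. simpl app. Csolve. }
  rewrite Csum_map_mull.
  assert (E : Csum (map (fun ks => Cmul (phi (xL2 B ks)) (Hs n (shift (-1) S ++ Sy (-1) b d :: xR2 B ks))) (ktuples n (nmv B)))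
     = CS2 (shift (-1) S ++ Sy (-1) b d :: B)).
  { unfold CS2. rewrite nmv_app, (nmv_stays (shift (-1) S)) by (apply shift_all; auto). simpl (nmv (Sy (-1) b d :: B)).
    apply Csum_map_ext. intros ks _. rewrite xL2_stays, xR2_stays by (apply shift_all; auto). reflexivity. }
  rewrite E. cbn [gj] in IH. rewrite IH. unfold delta. destruct (Nat.eqb a c); Csolve.
Qed.

Lemma CS2_main : forall m w, nmv w = m -> xvalid n w -> offle w -> CS2 w = Hs n w.
Proof. intro m. induction m as [m IHm] using (well_founded_induction lt_wf). intros w Hm Hv Ho.
  destruct (Nat.eq_dec m 0) as [E|E].
  - rewrite E in Hm. unfold CS2. rewrite Hm. simpl. destruct (nmv_zero_xR2 w Hm) as [-> ->]. rewrite Hphi0. Csolve.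
  - destruct (Z.eq_dec (K w) 0) as [EK|EK].
    2:{ unfold CS2. assert (Hs n w = C0) as ->.
        { unfold Hs, Hwin. replace (Z.eqb (K w) 0) with false by (symmetry; apply Z.eqb_neq; auto). auto. }
        rewrite (Csum_map_ext _ (fun _ => C0)). apply Csum_map_zero.
        intros ks Hks. apply ktuples_prop in Hks as [Lk _].
        unfold Hs, Hwin. rewrite K_xR2 by auto. replace (Z.eqb (K w) 0) with false by (symmetry; apply Z.eqb_neq; auto).
        Csolve. }
    destruct (rotate_pattern false w EK) as [v1 [v2 [g1 [S [g2 [B [-> [Hrot [H1 [H2 HS]]]]]]]]]]; [lia|].
    apply xvalid_app in Hv as [Hv1 Hv2].
    rewrite CS2_rot, H_tracial by auto. rewrite Hrot.
    assert (Hv' : xvalid n (Mv g1 :: S ++ Mv g2 :: B)) by (rewrite <- Hrot; apply xvalid_app; auto).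
    assert (Ho' : offle (Mv g1 :: S ++ Mv g2 :: B)) by (rewrite <- Hrot; unfold offle in *; apply Forall_app in Ho; apply Forall_app; tauto).
    assert (HSle : stayle S).
    { inversion Ho'; subst. apply Forall_app in H4 as [H4 _]. apply stayle_of; auto. }
    apply CS2_valley; auto.
    apply (IHm (nmv B)).
    + rewrite <- Hm, nmv_app. rewrite Nat.add_comm, <- nmv_app, Hrot. cbn [nmv]. rewrite nmv_app. rewrite (nmv_stays S HS). cbn [nmv]. lia.
    + rewrite nmv_app, nmv_stays by (apply shift_all; auto). auto.
    + inversion Hv'; subst. apply xvalid_app in H4 as [H4 H5]. inversion H5; subst.
      apply xvalid_app. split.
      * apply xvalid_shift; auto.
      * constructor; auto. simpl in *. tauto.
    + inversion Ho'; subst. apply Forall_app in H4 as [H4 H5]. inversion H5; subst.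
      apply Forall_app. split.
      * apply offle_shiftm1; auto.
      * constructor; auto. simpl; lia.
Qed.

Lemma conv_left : feq n (conv n (haar n) phi) (haar n).
Proof. intros w Hw. unfold conv. rewrite haar_H by auto.
  rewrite <- (CS_main n Hn phi Hphi0 Hrel Htr (nmv (map Mv w))); auto.
  2: apply valid_xvalid; auto.
  2:{ unfold offge. clear. induction w; simpl; constructor; auto. }
  unfold CS. replace (nmv (map Mv w)) with (length w) by (clear; induction w; simpl; auto).
  apply Csum_map_ext. intros ks Hks. apply ktuples_prop in Hks as [Lk _].
  rewrite haar_H by auto. rewrite left_xL, right_xR by auto. reflexivity.
Qed.

Lemma conv_right : feq n (conv n phi (haar n)) (haar n).
Proof. intros w Hw. unfold conv. rewrite haar_H by auto.
  rewrite <- (CS2_main (nmv (map Mv w))); auto.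
  2: apply valid_xvalid; auto.
  2:{ unfold offle. clear. induction w; simpl; constructor; auto. }
  unfold CS2. replace (nmv (map Mv w)) with (length w) by (clear; induction w; simpl; auto).
  apply Csum_map_ext. intros ks Hks. apply ktuples_prop in Hks as [Lk _].
  rewrite haar_H by auto. rewrite left_xL2, right_xR2 by auto. reflexivity.
Qed.
End S8.


Definition flip (g : gen) := mkgen (negb (st g)) (gi g) (gj g).
Definition swp (p : nat * nat) := (snd p, fst p).
Definition tr (r : sm) : sm := match r with Some (Some (p, q)) => Some (Some (q, p)) | _ => r end.

Lemma tr_comb : forall x y, tr (comb x y) = comb (tr y) (tr x).
Proof. intros [[[p q]|]|] [[[r s]|]|]; simpl; auto.
  destruct (Nat.eqb_spec q r); destruct (Nat.eqb_spec r q); subst; simpl; auto; lia. Qed.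
Lemma red_rev_swap : forall l, red (rev (map swp l)) = tr (red l).
Proof. induction l as [|a l IH]; [reflexivity|].
  change (rev (map swp (a::l))) with (rev (map swp l) ++ [swp a]). rewrite red_app, IH.
  change (tr (red (a :: l))) with (tr (comb (Some (Some a)) (red l))). rewrite tr_comb.
  destruct a; reflexivity. Qed.

Lemma adj_cons : forall g v, adj (g :: v) = adj v ++ [flip g].
Proof. reflexivity. Qed.

Lemma K_adj : forall v, K (map Mv (adj v)) = (- K (map Mv v))%Z.
Proof. induction v as [|g v IH]; [reflexivity|]. rewrite adj_cons, map_app, K_app, IH.
  change (map Mv (g :: v)) with (Mv g :: map Mv v). change (map Mv [flip g]) with [Mv (flip g)].
  rewrite !K_cons. unfold dK, flip; cbn [st K]. destruct (st g); simpl negb; cbv iota beta; lia. Qed.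

Lemma O_adj : forall v y, O (map Mv (adj v)) y = rev (map swp (O (map Mv v) (y + K (map Mv v))%Z)).
Proof. induction v as [|g v IH]; intros y; [reflexivity|]. rewrite adj_cons, map_app, O_app, IH.
  change (map Mv (g :: v)) with (Mv g :: map Mv v). change (map Mv [flip g]) with [Mv (flip g)].
  rewrite (O_cons (Mv g)), (K_cons (Mv g)), map_app, rev_app_distr.
  change (O [Mv (flip g)] y) with (lop (Mv (flip g)) (y - 0) ++ []). rewrite app_nil_r.
  change (K [Mv (flip g)]) with (dK (Mv (flip g)) + 0)%Z.
  f_equal.
  - f_equal. f_equal. f_equal. unfold flip, dK; cbn [st]. destruct (st g); simpl negb; cbv iota beta; lia.
  - replace (y + (dK (Mv g) + K (map Mv v)) - K (map Mv v))%Z with (y + dK (Mv g))%Z by lia.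
    unfold flip, lop, dK; cbn [st gi gj]. destruct (st g); simpl negb; cbv iota beta.
    + destruct (Z.eqb_spec (y - 0) 0); destruct (Z.eqb_spec (y + -1) (-1)); simpl; auto; lia.
    + destruct (Z.eqb_spec (y - 0) (-1)); destruct (Z.eqb_spec (y + 1) 0); simpl; auto; lia.
Qed.

Section S9.
Variable n : nat.
Hypothesis Hn : (0 < n)%nat.

Definition ip (r1 r2 : sm) : R := tv n (comb (tr r1) r2).
Definition rw (v : word) (x : Z) : sm := red (O (map Mv v) x).

Lemma bnd_map : forall v, bnd (map Mv v) = length v.
Proof. induction v; simpl; auto. Qed.

Lemma haar_adj : forall v w N, (length v + length w <= N)%nat ->
  haar n (adj v ++ w) = if Z.eqb (K (map Mv v)) (K (map Mv w))
     then RtoC (zprod (fun x => ip (rw v x) (rw w x)) (- Z.of_nat N) (2 * N + 1)) else C0.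
Proof. intros v w N HN. rewrite haar_H by auto. rewrite map_app.
  rewrite <- (Hwin_indep n _ N) by (rewrite bnd_app, !bnd_map; unfold adj; rewrite length_rev, length_map; lia).
  unfold Hwin. rewrite K_app, K_adj.
  destruct (Z.eqb_spec (- K (map Mv v) + K (map Mv w)) 0); destruct (Z.eqb_spec (K (map Mv v)) (K (map Mv w))); try lia; auto.
  f_equal. apply zprod_ext. intros x _. rewrite O_app, O_adj, red_app, red_rev_swap.
  replace (x - K (map Mv w) + K (map Mv v))%Z with x by lia. reflexivity.
Qed.
End S9.


Definition ent (r : sm) (ab : nat * nat) : R :=
  match r with None => 0
  | Some None => if Nat.eqb (fst ab) (snd ab) then 1 else 0
  | Some (Some (p, q)) => if Nat.eqb (fst ab) p && Nat.eqb (snd ab) q then 1 else 0 end.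
Definition pairs (n : nat) := flat_map (fun a => map (fun b => (a, b)) (seq 0 n)) (seq 0 n).

Lemma Rsum_mulr : forall {A} (f : A -> R) c l, Rsum (map (fun x => f x * c) l) = Rsum (map f l) * c.
Proof. induction l; simpl; [ring|]. rewrite IHl; ring. Qed.
Lemma Rsum_zero : forall {A} (l : list A), Rsum (map (fun _ => 0) l) = 0.
Proof. induction l; simpl; auto. rewrite IHl; ring. Qed.
Lemma Rsum_map_map : forall {A B} (f : B -> R) (g : A -> B) l, Rsum (map f (map g l)) = Rsum (map (fun x => f (g x)) l).
Proof. intros; rewrite map_map; auto. Qed.

Lemma pairs_E : forall n p q h, (p < n)%nat -> (q < n)%nat ->
  Rsum (map (fun ab => ent (Some (Some (p, q))) ab * h ab) (pairs n)) = h (p, q).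
Proof. intros. unfold pairs. rewrite Rsum_flat_map.
  rewrite (Rsum_ext _ (fun a => if Nat.eqb a p then h (a, q) else 0)).
  - apply Rsum_delta0 with (g := fun a => h (a, q)); auto.
  - intros a _. rewrite Rsum_map_map. simpl. destruct (Nat.eqb a p).
    + rewrite (Rsum_ext _ (fun b => if Nat.eqb b q then h (a, b) else 0)).
      apply Rsum_delta0 with (g := fun b => h (a, b)); auto.
      intros b _. simpl. destruct (Nat.eqb b q); ring.
    + rewrite (Rsum_ext _ (fun _ => 0)). apply Rsum_zero. intros; simpl; ring.
Qed.

Section S10.
Variable n : nat.
Hypothesis Hn : (0 < n)%nat.

Ltac fin := repeat (match goal with |- context [Nat.eqb ?a ?b] => destruct (Nat.eqb_spec a b) end;
  subst; simpl in *); try lia;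
  repeat match goal with |- context [Nat.ltb ?a ?b] => replace (Nat.ltb a b) with true by (symmetry; apply Nat.ltb_lt; lia) end;
  try ring; try (field; apply not_0_INR; lia).

Lemma ip_sum : forall r1 r2, svalid n r1 -> svalid n r2 ->
  ip n r1 r2 = / INR n * Rsum (map (fun ab => ent r1 ab * ent r2 ab) (pairs n)).
Proof. intros [[[p q]|]|] r2; unfold svalid, pvalid; simpl fst; simpl snd; intros H1 H2.
  - rewrite pairs_E by tauto. destruct r2 as [[[r s]|]|]; unfold ip; simpl; unfold svalid, pvalid in H2; simpl in H2; fin.
  - destruct r2 as [[[r s]|]|]; unfold ip; simpl tr; simpl comb.
    + rewrite (Rsum_ext _ (fun ab => ent (Some (Some (r, s))) ab * ent (Some None) ab)) by (intros; ring).
      rewrite pairs_E by (unfold svalid, pvalid in H2; simpl in H2; tauto). simpl.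
      unfold svalid, pvalid in H2; simpl in H2; fin.
    + unfold pairs. rewrite Rsum_flat_map.
      rewrite (Rsum_ext _ (fun _ => 1)). rewrite Rsum_const, length_seq. simpl. field. apply not_0_INR; lia.
      intros a Ha. apply in_seq in Ha. rewrite Rsum_map_map.
      rewrite (Rsum_ext _ (fun b => if Nat.eqb b a then 1 else 0)).
      apply Rsum_delta0 with (g := fun _ => 1); lia.
      intros b _. simpl. destruct (Nat.eqb_spec a b); destruct (Nat.eqb_spec b a); subst; try lia; ring.
    + simpl. rewrite (Rsum_ext _ (fun _ => 0)) by (intros; simpl; ring). rewrite Rsum_zero. ring.
  - unfold ip. simpl. rewrite (Rsum_ext _ (fun _ => 0)) by (intros; simpl; ring). rewrite Rsum_zero. ring.
Qed.
End S10.

Fixpoint tup {A} (T : list A) (m : nat) : list (list A) :=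
  match m with Datatypes.O => [[]] | S m' => flat_map (fun t => map (cons t) (tup T m')) T end.
Fixpoint zp {A} (F : Z -> A -> R) (lo : Z) (s : list A) : R :=
  match s with [] => 1 | t :: s' => F lo t * zp F (lo + 1)%Z s' end.

Lemma Rsum_prod : forall {A B} (f : A -> R) (g : B -> R) l1 l2,
  Rsum (map f l1) * Rsum (map g l2) = Rsum (map (fun a => Rsum (map (fun b => f a * g b) l2)) l1).
Proof. intros. rewrite <- Rsum_mulr. apply Rsum_ext. intros a _. rewrite Rsum_mull. auto. Qed.

Lemma zprod_expand : forall {A} (F : Z -> A -> R) T m lo,
  zprod (fun x => Rsum (map (F x) T)) lo m = Rsum (map (zp F lo) (tup T m)).
Proof. induction m; intros; simpl. ring.
  rewrite IHm, Rsum_prod, Rsum_flat_map. apply Rsum_ext. intros t _. rewrite Rsum_map_map. auto. Qed.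

Lemma zp_mult : forall {A} (F G : Z -> A -> R) s lo, zp (fun x t => F x t * G x t) lo s = zp F lo s * zp G lo s.
Proof. induction s; intros; simpl; [ring|]. rewrite IHs; ring. Qed.

Definition krange (N : nat) : list Z := map (fun i => (Z.of_nat i - Z.of_nat N)%Z) (seq 0 (2 * N + 1)).
Lemma krange_delta : forall N a (h : Z -> R), (Z.abs a <= Z.of_nat N)%Z ->
  Rsum (map (fun k => if Z.eqb a k then h k else 0) (krange N)) = h a.
Proof. intros. unfold krange. rewrite Rsum_map_map.
  rewrite (Rsum_ext _ (fun i => if Nat.eqb i (Z.to_nat (a + Z.of_nat N)) then h (Z.of_nat i - Z.of_nat N)%Z else 0)).
  - rewrite Rsum_delta0 by lia. f_equal. lia.
  - intros i _. destruct (Z.eqb_spec a (Z.of_nat i - Z.of_nat N)); destruct (Nat.eqb_spec i (Z.to_nat (a + Z.of_nat N))); auto; lia.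
Qed.

Lemma zprod_pos : forall c lo m, 0 < c -> 0 < zprod (fun _ => c) lo m.
Proof. intros c lo m; revert lo; induction m; intros; simpl. lra. apply Rmult_lt_0_compat; auto. Qed.

Lemma Rsum_nonneg_map : forall {A} (f : A -> R) l, (forall x, 0 <= f x) -> 0 <= Rsum (map f l).
Proof. induction l; intros; simpl. lra. pose proof (H a). specialize (IHl H). lra. Qed.

Lemma fst_Csum : forall l, fst (Csum l) = Rsum (map fst l).
Proof. induction l; simpl; auto. rewrite IHl; auto. Qed.
Lemma snd_Csum : forall l, snd (Csum l) = Rsum (map snd l).
Proof. induction l; simpl; auto. rewrite IHl; auto. Qed.

Lemma bilin : forall {A B} (a b : A -> R) (F : A -> B -> R) (l : list A) (T : list B),
  Rsum (map (fun p => Rsum (map (fun q => a p * b q * Rsum (map (fun t => F p t * F q t) T)) l)) l) =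
  Rsum (map (fun t => Rsum (map (fun p => a p * F p t) l) * Rsum (map (fun q => b q * F q t) l)) T).
Proof. intros.
  rewrite (Rsum_ext _ (fun p => Rsum (map (fun t => Rsum (map (fun q => (a p * F p t) * (b q * F q t)) l)) T))).
  2:{ intros p _. rewrite Rsum_swap. apply Rsum_ext. intros q _. rewrite <- Rsum_mull. apply Rsum_ext. intros; ring. }
  rewrite Rsum_swap. apply Rsum_ext. intros t _. rewrite Rsum_prod. auto.
Qed.


Lemma quad_nonneg : forall {A B} (a : A -> R) (F : A -> B -> R) l T,
  0 <= Rsum (map (fun p => Rsum (map (fun q => a p * a q * Rsum (map (fun t => F p t * F q t) T)) l)) l).
Proof. intros. rewrite bilin. apply Rsum_nonneg_map. intros t. apply Rle_0_sqr. Qed.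

Lemma quad_anti : forall {A B} (a b : A -> R) (F : A -> B -> R) l T,
  Rsum (map (fun p => Rsum (map (fun q => (a p * b q - b p * a q) * Rsum (map (fun t => F p t * F q t) T)) l)) l) = 0.
Proof. intros.
  rewrite (Rsum_ext _ (fun p => Rsum (map (fun q => a p * b q * Rsum (map (fun t => F p t * F q t) T)) l) +
     (-1) * Rsum (map (fun q => b p * a q * Rsum (map (fun t => F p t * F q t) T)) l))).
  2:{ intros p _. rewrite <- Rsum_mull, <- Rsum_add. apply Rsum_ext. intros; ring. }
  rewrite Rsum_add, Rsum_mull, !bilin.
  rewrite (Rsum_ext (fun t => Rsum (map (fun p => b p * F p t) l) * Rsum (map (fun q => a q * F q t) l))
      (fun t => Rsum (map (fun p => a p * F p t) l) * Rsum (map (fun q => b q * F q t) l))) by (intros; ring).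
  ring.
Qed.

Definition lsum (l : list (C * word)) : nat := fold_right (fun p acc => (length (snd p) + acc)%nat) 0%nat l.
Lemma in_lsum : forall l p, In p l -> (length (snd p) <= lsum l)%nat.
Proof. induction l; simpl; intros p Hp; [contradiction|]. destruct Hp; subst; [lia|]. apply IHl in H; lia. Qed.

Section S11.
Variable n : nat.
Hypothesis Hn : (0 < n)%nat.


Variable N0 : nat.
Definition Aw (v : word) (s : list (nat * nat)) : R := zp (fun x ab => ent (rw v x) ab) (- Z.of_nat N0) s.
Definition Fv (v : word) (t : Z * list (nat * nat)) : R :=
  (if Z.eqb (K (map Mv v)) (fst t) then 1 else 0) * Aw v (snd t).
Definition Tf : list (Z * list (nat * nat)) :=
  flat_map (fun k => map (fun s => (k, s)) (tup (pairs n) (2 * N0 + 1))) (krange N0).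
Definition cc : R := zprod (fun _ => / INR n) (- Z.of_nat N0) (2 * N0 + 1).

Lemma svalid_rw : forall v x, valid n v -> svalid n (rw v x).
Proof. intros. unfold rw. apply red_valid, O_valid, valid_xvalid; auto. Qed.

Lemma haar_feat : forall v w, valid n v -> valid n w -> (length v + length w <= N0)%nat ->
  haar n (adj v ++ w) = RtoC (cc * Rsum (map (fun t => Fv v t * Fv w t) Tf)).
Proof. intros v w Hv Hw HN. rewrite (haar_adj n Hn v w N0 HN).
  assert (HK : (Z.abs (K (map Mv v)) <= Z.of_nat N0)%Z).
  { pose proof (K_bnd (map Mv v)). rewrite bnd_map in H. lia. }
  unfold Tf. rewrite Rsum_flat_map.
  rewrite (Rsum_ext _ (fun k => if Z.eqb (K (map Mv v)) k then
     ((if Z.eqb (K (map Mv w)) k then 1 else 0) * Rsum (map (fun s => Aw v s * Aw w s) (tup (pairs n) (2 * N0 + 1)))) else 0)).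
  2:{ intros k _. rewrite Rsum_map_map. unfold Fv. simpl fst; simpl snd.
      destruct (Z.eqb (K (map Mv v)) k).
      - rewrite <- Rsum_mull. apply Rsum_ext. intros; ring.
      - rewrite (Rsum_ext _ (fun _ => 0)) by (intros; ring). apply Rsum_zero. }
  rewrite krange_delta with (h := fun k => (if Z.eqb (K (map Mv w)) k then 1 else 0) * Rsum (map (fun s => Aw v s * Aw w s) (tup (pairs n) (2 * N0 + 1)))) by auto.
  rewrite (Z.eqb_sym (K (map Mv w))). destruct (Z.eqb (K (map Mv v)) (K (map Mv w))).
  - f_equal. rewrite Rmult_1_l. unfold cc.
    rewrite (zprod_ext _ (fun x => / INR n * Rsum (map (fun ab => ent (rw v x) ab * ent (rw w x) ab) (pairs n)))).
    + rewrite zprod_mult. f_equal.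
      rewrite (zprod_expand (fun x ab => ent (rw v x) ab * ent (rw w x) ab)).
      apply Rsum_ext. intros s _. unfold Aw. rewrite zp_mult. auto.
    + intros x _. apply ip_sum; auto; apply svalid_rw; auto.
  - unfold RtoC, C0. f_equal. ring.
Qed.

Lemma cc_pos : 0 < cc.
Proof. unfold cc. apply zprod_pos. apply Rinv_0_lt_compat. apply lt_0_INR; lia. Qed.
End S11.

Lemma haar_positive : forall n, (0 < n)%nat -> positive n (haar n).
Proof. intros n Hn l Hl. cbv zeta.
  set (N0 := (2 * lsum l)%nat).
  assert (Hf : forall p q, In p l -> In q l ->
     haar n (adj (snd p) ++ snd q) = RtoC (cc n N0 * Rsum (map (fun t => Fv N0 (snd p) t * Fv N0 (snd q) t) (Tf n N0)))).
  { intros p q Hp Hq. apply haar_feat; auto.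
    - rewrite Forall_forall in Hl; apply Hl; auto.
    - rewrite Forall_forall in Hl; apply Hl; auto.
    - pose proof (in_lsum l p Hp). pose proof (in_lsum l q Hq). unfold N0. unfold word in *. lia. }
  set (S := fun (p q : C * word) => Rsum (map (fun t => Fv N0 (snd p) t * Fv N0 (snd q) t) (Tf n N0))).
  pose proof (cc_pos n Hn N0) as Hc.
  split.
  - rewrite snd_Csum, Rsum_flat_map.
    rewrite (Rsum_ext _ (fun p => Rsum (map (fun q => cc n N0 * ((fst (fst p) * snd (fst q) - snd (fst p) * fst (fst q)) * S p q)) l))).
    + rewrite (Rsum_ext _ (fun p => cc n N0 * Rsum (map (fun q => (fst (fst p) * snd (fst q) - snd (fst p) * fst (fst q)) * S p q) l))).
      * rewrite Rsum_mull. unfold S. rewrite quad_anti. ring.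
      * intros p _. apply Rsum_mull.
    + intros p Hp. rewrite Rsum_map_map. apply Rsum_ext. intros q Hq. rewrite Hf by auto.
      unfold S. destruct p as [[x1 y1] wp]; destruct q as [[x2 y2] wq].
      unfold Cmul, Cconj, RtoC; simpl. ring.
  - rewrite fst_Csum, Rsum_flat_map.
    rewrite (Rsum_ext _ (fun p => cc n N0 * (Rsum (map (fun q => fst (fst p) * fst (fst q) * S p q) l) +
                                           Rsum (map (fun q => snd (fst p) * snd (fst q) * S p q) l)))).
    + rewrite Rsum_mull, Rsum_add. unfold S.
      apply Rmult_le_pos; [lra|]. apply Rplus_le_le_0_compat; apply quad_nonneg.
    + intros p Hp. rewrite Rsum_map_map. rewrite <- Rsum_add, <- Rsum_mull. apply Rsum_ext. intros q Hq. rewrite Hf by auto.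
      unfold S. destruct p as [[x1 y1] wp]; destruct q as [[x2 y2] wq].
      unfold Cmul, Cconj, RtoC; simpl. ring.
Qed.


Theorem mainTheorem10 (n : nat) (Hn : (0 < n)%nat) :
  is_state n (haar n) /\ tracial n (haar n) /\
  (forall phi : functional, is_state n phi -> tracial n phi ->
     feq n (conv n (haar n) phi) (haar n) /\ feq n (conv n phi (haar n)) (haar n)).
Proof.
  split; [|split].
  - split; [apply haar_nil; auto|split; [apply haar_rel; auto|apply haar_positive; auto]].
  - apply haar_tracial; auto.
  - intros phi [H0 [Hr _]] Ht. split.
    + apply conv_left; auto.
    + apply conv_right; auto.
Qed.
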